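(* Let $d$ be a positive integer, $b\geqslant5$ an integer, $a>0$ real with $\zeta=\log_b a\notin\mathbb{Q}$. Define $f:\mathbb{T}^d\to\mathbb{T}^d$ by $f(x)_i=\{\zeta+\sum_{j=1}^{i}\binom{i}{j}x_j\}$, $i=1,\dots,d$, and for $t\in\{1,\dots,b-1\}$ let $U_t=\{x\in\mathbb{T}^d:\log_b t\leqslant x_d<\log_b(t+1)\}$. For $x,y\in\mathbb{T}^d$ write $x\sim_k y$ if for every $i\in\{0,\dots,k-1\}$ there is $t$ such that $f^i(x)$ and $f^i(y)$ both lie in the closure of $U_t$, and $x\sim y$ if $x\sim_k y$ for all $k\in\mathbb{N}_{>0}$. Let $M$ be the $d\times d$ matrix with $M_{ij}=\binom{i}{j}$ for $j\leqslant i$ and $0$ otherwise, and call $r\in\mathbb{R}^d$ stable if the last coordinate of $M^k r$ is an integer for every $k\in\mathbb{N}_{>0}$. If $x,y\in\mathbb{T}^d$ are such that $y-x$ is not stable, then $x\not\sim y$.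
   Context: $\mathbb{T}^d=\mathbb{R}^d/\mathbb{Z}^d$ identified with $[0,1)^d$; $\{y\}$ is the fractional part. Since $M$ is an integer matrix, every vector in $\mathbb{Z}^d$ is stable and stability of $y-x$ is well defined for $x,y\in\mathbb{T}^d$ (taking any lift to $\mathbb{R}^d$). *)

(* Defs.v *)
(* concrete reals R. Vectors in R^d are functions nat -> R,
   using coordinates 1..d (values at other indices are irrelevant). *)
From Stdlib Require Import Reals ZArith.
Open Scope R_scope.

Fixpoint sum1 (n : nat) (g : nat -> R) : R :=
  match n with
  | O => 0
  | S m => sum1 m g + g (S m)
  end.

Definition binom (i j : nat) : R := Binomial.C i j.

Definition logb (b : nat) (x : R) : R := ln x / ln (INR b).

Definition frac (y : R) : R := frac_part y.

Definition in_torus (d : nat) (x : nat -> R) : Prop :=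
  forall i, (1 <= i <= d)%nat -> 0 <= x i < 1.

Definition fmap (zeta : R) (x : nat -> R) : nat -> R :=
  fun i => frac (zeta + sum1 i (fun j => binom i j * x j)).

Definition U (d b t : nat) (u : nat -> R) : Prop :=
  in_torus d u /\ logb b (INR t) <= u d < logb b (INR t + 1).

(* closure in the torus T^d = R^d / Z^d (topology of the quotient,
   coordinatewise distance to the nearest integer translate) *)
Definition torus_closure (d : nat) (A : (nat -> R) -> Prop) (x : nat -> R) : Prop :=
  forall eps, 0 < eps -> exists u, A u /\
    forall i, (1 <= i <= d)%nat -> exists k : Z, Rabs (x i - u i - IZR k) < eps.

Definition sim_k (d b : nat) (zeta : R) (k : nat) (x y : nat -> R) : Prop :=
  forall i, (i < k)%nat -> exists t, (1 <= t <= b - 1)%nat /\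
    torus_closure d (U d b t) (Nat.iter i (fmap zeta) x) /\
    torus_closure d (U d b t) (Nat.iter i (fmap zeta) y).

Definition sim (d b : nat) (zeta : R) (x y : nat -> R) : Prop :=
  forall k, (0 < k)%nat -> sim_k d b zeta k x y.

Definition Mmul (r : nat -> R) : nat -> R :=
  fun i => sum1 i (fun j => binom i j * r j).

Definition stable (d : nat) (r : nat -> R) : Prop :=
  forall k, (0 < k)%nat -> exists z : Z, Nat.iter k Mmul r d = IZR z.

Definition is_rational (x : R) : Prop :=
  exists p q : Z, q <> 0%Z /\ x = IZR p / IZR q.

(* Main.v *)
Require Import Defs.
From Stdlib Require Import Reals ZArith.
From Stdlib Require Import Lra Lia Psatz Classical List.
Import ListNotations.
Open Scope R_scope.

Fixpoint sm (N : nat) (g : nat -> R) : R :=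
  match N with O => 0 | S M => sm M g + g M end.

Lemma sm_ext N f g : (forall n, (n < N)%nat -> f n = g n) -> sm N f = sm N g.
Proof. induction N; simpl; intros H; auto. rewrite IHN by (intros; apply H; lia). rewrite H by lia. auto. Qed.

Lemma sm_add N f g : sm N (fun n => f n + g n) = sm N f + sm N g.
Proof. induction N; simpl; [lra|]. rewrite IHN; lra. Qed.

Lemma sm_opp N f : sm N (fun n => - f n) = - sm N f.
Proof. induction N; simpl; [lra|]. rewrite IHN; lra. Qed.

Lemma sm_minus N f g : sm N (fun n => f n - g n) = sm N f - sm N g.
Proof. induction N; simpl; [lra|]. rewrite IHN; lra. Qed.

Lemma sm_scal N a f : sm N (fun n => a * f n) = a * sm N f.
Proof. induction N; simpl; [lra|]. rewrite IHN; lra. Qed.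

Lemma sm_const N a : sm N (fun _ => a) = INR N * a.
Proof. induction N; simpl sm; [simpl; lra|]. rewrite IHN, S_INR; lra. Qed.

Lemma sm_le N f g : (forall n, (n < N)%nat -> f n <= g n) -> sm N f <= sm N g.
Proof. induction N; simpl; intros H; [lra|]. assert (f N <= g N) by (apply H; lia).
 assert (sm N f <= sm N g) by (apply IHN; intros; apply H; lia). lra. Qed.

Lemma sm_abs N f : Rabs (sm N f) <= sm N (fun n => Rabs (f n)).
Proof. induction N; simpl; [rewrite Rabs_R0; lra|].
 eapply Rle_trans; [apply Rabs_triang|]. lra. Qed.

Lemma sm_abs_bound N f B : (forall n, (n < N)%nat -> Rabs (f n) <= B) -> Rabs (sm N f) <= INR N * B.
Proof. intros H. eapply Rle_trans; [apply sm_abs|]. rewrite <- sm_const. apply sm_le. auto. Qed.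

Lemma sm_swap N M (f : nat -> nat -> R) :
  sm N (fun n => sm M (fun m => f n m)) = sm M (fun m => sm N (fun n => f n m)).
Proof. induction N; simpl.
 - induction M; simpl; auto. rewrite <- IHM; lra.
 - rewrite IHN. rewrite <- sm_add. auto. Qed.

Lemma sm_telescope N F : sm N (fun n => F (S n) - F n) = F N - F O.
Proof. induction N; simpl; [lra|]. rewrite IHN; lra. Qed.

Lemma sm_mul_sm N M f g : sm N f * sm M g = sm N (fun n => sm M (fun m => f n * g m)).
Proof. induction N; simpl; [lra|]. rewrite <- IHN. rewrite sm_scal. lra. Qed.

Lemma sm_shift_bound N s f B : (forall n, Rabs (f n) <= B) ->
  Rabs (sm N (fun n => f (n + s)%nat) - sm N f) <= 2 * INR s * B.
Proof. intros HB. induction s.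
 - simpl. rewrite (sm_ext N (fun n => f (n + 0)%nat) f) by (intros; f_equal; lia).
   rewrite Rminus_diag, Rabs_R0; lra.
 - assert (E: sm N (fun n => f (n + S s)%nat) - sm N (fun n => f (n + s)%nat) = f (N + s)%nat - f s).
   { rewrite <- sm_minus.
     pose proof (sm_telescope N (fun k => f (k + s)%nat)) as T. simpl in T.
     rewrite <- T. apply sm_ext. intros. simpl. f_equal. f_equal. lia. }
   rewrite S_INR.
   assert (Rabs (f (N+s)%nat) <= B) by auto. assert (Rabs (f s) <= B) by auto.
   revert IHs E H H0. generalize (sm N (fun n => f (n + S s)%nat)) (sm N (fun n => f (n + s)%nat)) (sm N f) (f (N+s)%nat) (f s).
   intros a b c u v H1 H2 H3 H4. unfold Rabs in *. repeat destruct Rcase_abs; lra. Qed.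

Lemma sm_nonneg N f : (forall n, (n < N)%nat -> 0 <= f n) -> 0 <= sm N f.
Proof. intros H. rewrite <- (Rmult_0_r (INR N)), <- sm_const. apply sm_le. auto. Qed.

Lemma sm_CS N f : (sm N f)^2 <= INR N * sm N (fun n => (f n)^2).
Proof. destruct N. simpl; lra.
 assert (HN: 0 < INR (S N)) by (apply lt_0_INR; lia).
 set (t := sm (S N) f / INR (S N)).
 assert (H: 0 <= sm (S N) (fun n => (f n - t)^2)) by (apply sm_nonneg; intros; apply pow2_ge_0).
 rewrite (sm_ext (S N) _ (fun n => (f n)^2 + (-2*t) * f n + t^2)) in H; [|intros; ring].
 rewrite !sm_add, sm_scal, sm_const in H.
 assert (E: sm (S N) f = t * INR (S N)) by (unfold t; field; lra).
 rewrite E in H. rewrite E. clearbody t. generalize dependent (sm (S N) (fun n => f n ^ 2)). intros Q H. assert (0 <= INR (S N) * (Q - INR (S N) * t^2)) by (apply Rmult_le_pos; lra). nra. Qed.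

Fixpoint PD (D : nat) (f : nat -> R) : Prop :=
  match D with
  | O => forall n, f n = f O
  | S D' => PD D' (fun n => f (S n) - f n)
  end.

Lemma PD_ext D f g : (forall n, f n = g n) -> PD D f -> PD D g.
Proof. revert f g; induction D; simpl; intros f g E H.
 - intros n; rewrite <- !E; auto.
 - apply (IHD (fun n => f (S n) - f n)); auto. intros; rewrite !E; auto. Qed.

Lemma PD_const D a : PD D (fun _ => a).
Proof. revert a; induction D; simpl; intros; auto.
 Qed.

Lemma PD_add D f g : PD D f -> PD D g -> PD D (fun n => f n + g n).
Proof. revert f g; induction D; simpl; intros f g Hf Hg.
 - intros n; rewrite Hf, Hg; auto.
 - apply (PD_ext D (fun n => (f (S n) - f n) + (g (S n) - g n))); [intros; ring|]. auto. Qed.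

Lemma PD_scal D a f : PD D f -> PD D (fun n => a * f n).
Proof. revert f; induction D; simpl; intros f Hf.
 - intros n; rewrite Hf; auto.
 - apply (PD_ext D (fun n => a * (f (S n) - f n))); [intros; ring|]. auto. Qed.

Lemma PD_opp D f : PD D f -> PD D (fun n => - f n).
Proof. intros H. apply (PD_ext D (fun n => (-1) * f n)); [intros; ring|]. apply PD_scal; auto. Qed.

Lemma PD_minus D f g : PD D f -> PD D g -> PD D (fun n => f n - g n).
Proof. intros. apply PD_add; auto. apply PD_opp; auto. Qed.

Lemma PD_S D f : PD D f -> PD (S D) f.
Proof. revert f; induction D; intros f Hf.
 - simpl in *. intros n. rewrite (Hf (S n)), (Hf n), (Hf 1%nat). auto.
 - change (PD (S D) (fun n => f (S n) - f n)). apply IHD. exact Hf. Qed.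

Lemma PD_le D D' f : (D <= D')%nat -> PD D f -> PD D' f.
Proof. induction 1; auto. intros; apply PD_S; auto. Qed.

Lemma PD_shift D s f : PD D f -> PD D (fun n => f (n + s)%nat).
Proof. revert f; induction D; simpl; intros f Hf.
 - intros n; rewrite Hf, (Hf s); auto.
 - apply (PD_ext D (fun n => (fun k => f (S k) - f k) (n + s)%nat)); [intros; simpl; auto|]. apply (IHD (fun k => f (S k) - f k)); auto. Qed.

Lemma PD_sumshift D h f : PD D f -> PD D (fun n => sm h (fun t => f (n + t)%nat)).
Proof. intros Hf; induction h; simpl.
 - apply PD_const.
 - apply PD_add; auto. apply PD_shift; auto. Qed.

Lemma PD_diffh D h f : PD (S D) f -> PD D (fun n => f (n + h)%nat - f n).
Proof. intros Hf. simpl in Hf.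
 apply (PD_ext D (fun n => sm h (fun t => (fun k => f (S k) - f k) (n + t)%nat))).
 - intros n. pose proof (sm_telescope h (fun t => f (n + t)%nat)) as T. simpl in T.
   rewrite (sm_ext h _ (fun t => f (n + S t)%nat - f (n + t)%nat)) by (intros; simpl; repeat f_equal; lia).
   rewrite T. repeat f_equal; lia.
 - apply (PD_sumshift D h (fun k => f (S k) - f k)); auto. Qed.

Lemma PD_affine D f : PD D f -> forall s q, PD D (fun m => f (s + q * m)%nat).
Proof. revert f; induction D; simpl; intros f Hf s q.
 - intros m; rewrite Hf, (Hf (s + q * 0)%nat); auto.
 - apply (PD_ext D (fun m => (fun n => f (n + q)%nat - f n) (s + q * m)%nat)).
   + intros m; cbv beta. replace (s + q * S m)%nat with (s + q * m + q)%nat by lia. reflexivity.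
   + apply (IHD (fun n => f (n + q)%nat - f n)). apply PD_diffh. simpl. auto. Qed.

Lemma PD_mulX D f : PD D f -> PD (S D) (fun n => INR n * f n).
Proof. revert f; induction D; intros f Hf.
 - change (forall n, INR (S n) * f (S n) - INR n * f n = INR 1 * f 1%nat - INR 0 * f 0%nat). intros n. simpl in Hf. rewrite (Hf (S n)), (Hf n), (Hf 1%nat). rewrite S_INR. simpl (INR 1). simpl (INR 0). ring.
 - change (PD (S D) (fun n => INR (S n) * f (S n) - INR n * f n)).
   apply (PD_ext (S D) (fun n => INR n * (f (S n) - f n) + f (S n))).
   + intros n; rewrite S_INR; ring.
   + apply PD_add.
     * apply IHD. simpl in Hf. auto.
     * apply (PD_ext _ (fun n => f (n + 1)%nat)); [intros; f_equal; lia|]. apply PD_shift. auto. Qed.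

Lemma PD_pow D : PD D (fun n => INR n ^ D).
Proof. induction D.
 - simpl. auto.
 - apply (PD_ext _ (fun n => INR n * INR n ^ D)); [intros; simpl; auto|]. apply PD_mulX; auto. Qed.

Lemma PD_sum1 D k (g : nat -> nat -> R) : (forall j, (1 <= j <= k)%nat -> PD D (g j)) ->
  PD D (fun n => sum1 k (fun j => g j n)).
Proof. induction k; simpl; intros H.
 - apply PD_const.
 - apply PD_add. apply IHk; intros; apply H; lia. apply H; lia. Qed.

Lemma PD_G D h : PD D (fun n => (INR n + INR h)^(S (S D)) - INR n ^ (S (S D)) - INR (S (S D)) * INR h * INR n ^ (S D)).
Proof. induction D.
 - apply (PD_ext 0 (fun _ => INR h ^ 2)); [intros; rewrite !S_INR; simpl; ring|]. apply PD_const.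
 - apply (PD_ext (S D) (fun n => INR n * ((INR n + INR h)^(S (S D)) - INR n ^ (S (S D)) - INR (S (S D)) * INR h * INR n ^ (S D))
      + INR h * ((INR n + INR h)^(S (S D)) - INR n ^ (S (S D))))).
   + intros n. rewrite (S_INR (S (S D))). simpl. ring.
   + apply PD_add. apply PD_mulX; auto. apply PD_scal.
     apply (PD_ext _ (fun n => (fun k => INR k ^ S (S D)) (n + h)%nat - INR n ^ S (S D))); [intros; rewrite plus_INR; auto|].
     apply (PD_diffh (S D) h (fun k => INR k ^ S (S D))). apply PD_pow. Qed.

Definition Lead D c f := PD (pred D) (fun n => f n - c * INR n ^ D).

Lemma Lead_ext D c c' f g : c = c' -> (forall n, f n = g n) -> Lead D c f -> Lead D c' g.
Proof. unfold Lead; intros <- E H. apply (PD_ext _ (fun n => f n - c * INR n ^ D)); [intros; rewrite E; auto|auto]. Qed.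

Lemma Lead_PD D c f : Lead D c f -> PD D f.
Proof. unfold Lead; intros H. apply (PD_ext D (fun n => (f n - c * INR n ^ D) + c * INR n ^ D)); [intros; ring|].
 apply PD_add. apply (PD_le (pred D)); [lia|auto]. apply PD_scal, PD_pow. Qed.

Lemma Lead_add D c f g : Lead D c f -> PD (pred D) g -> Lead D c (fun n => f n + g n).
Proof. unfold Lead; intros. apply (PD_ext _ (fun n => (f n - c * INR n ^ D) + g n)); [intros; ring|]. apply PD_add; auto. Qed.

Lemma Lead_scal D a c f : Lead D c f -> Lead D (a * c) (fun n => a * f n).
Proof. unfold Lead; intros. apply (PD_ext _ (fun n => a * (f n - c * INR n ^ D))); [intros; ring|]. apply PD_scal; auto. Qed.

Lemma Lead_diff D c f h : Lead (S (S D)) c f -> Lead (S D) (c * INR (S (S D)) * INR h) (fun n => f (n + h)%nat - f n).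
Proof. unfold Lead; simpl pred; intros H.
 apply (PD_ext D (fun n => ((fun k => f k - c * INR k ^ S (S D)) (n + h)%nat - (f n - c * INR n ^ S (S D)))
   + c * ((INR n + INR h)^(S (S D)) - INR n ^ (S (S D)) - INR (S (S D)) * INR h * INR n ^ (S D)))).
 - intros n. simpl. rewrite plus_INR. ring.
 - apply PD_add. apply (PD_diffh D h (fun k => f k - c * INR k ^ S (S D))). auto. apply PD_scal. apply PD_G. Qed.

Lemma Lead_antidiff D c f : Lead (S D) (c * INR (S (S D))) (fun n => f (S n) - f n) -> Lead (S (S D)) c f.
Proof. unfold Lead; simpl pred; intros H.
 change (PD D (fun n => (f (S n) - c * INR (S n) ^ S (S D)) - (f n - c * INR n ^ S (S D)))).
 apply (PD_ext D (fun n => (f (S n) - f n - c * INR (S (S D)) * INR n ^ S D)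
   - c * ((INR n + INR 1)^(S (S D)) - INR n ^ (S (S D)) - INR (S (S D)) * INR 1 * INR n ^ (S D)))).
 - intros n. rewrite (S_INR n). simpl (INR 1). ring.
 - apply PD_minus; auto. apply PD_scal. apply PD_G. Qed.

Lemma Lead_affine D c f s q : Lead D c f -> Lead D (c * INR q ^ D) (fun m => f (s + q * m)%nat).
Proof. unfold Lead; intros H. destruct D.
 - simpl in *. intros m. pose proof (H (s + q * m)%nat). pose proof (H (s + q * 0)%nat). lra.
 - simpl pred in *.
   apply (PD_ext D (fun m => (fun n => f n - c * INR n ^ S D) (s + q * m)%nat
     + c * ((fun n => (fun k => INR k ^ S D) (n + s)%nat - INR n ^ S D) (0 + q * m)%nat))).
   + intros m. cbv beta. replace (0 + q * m + s)%nat with (s + q * m)%nat by lia. replace (0 + q * m)%nat with (q * m)%nat by lia. rewrite mult_INR, Rpow_mult_distr. ring.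
   + apply PD_add. apply (PD_affine D (fun n => f n - c * INR n ^ S D)); auto. apply PD_scal. apply (PD_affine D (fun n => (fun k => INR k ^ S D) (n + s)%nat - INR n ^ S D)). apply (PD_diffh D s (fun k => INR k ^ S D)). apply PD_pow. Qed.

Lemma PD_extract D f : PD (S D) f -> exists c, PD D (fun n => f n - c * INR n ^ S D).
Proof. revert f; induction D; intros f Hf.
 - simpl in Hf. exists (f 1%nat - f 0%nat). simpl. intros n. induction n.
   + simpl. ring.
   + rewrite S_INR. specialize (Hf n). simpl in *. lra.
 - simpl in Hf. destruct (IHD _ Hf) as [c' Hc'].
   exists (c' / INR (S (S D))).
   apply (Lead_antidiff D). eapply Lead_ext; [| |exact Hc'].
   + field. apply not_0_INR. lia.
   + auto. Qed.

Definition irr x := ~ is_rational x.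

Lemma irr_mulZ x z : irr x -> z <> 0%Z -> irr (IZR z * x).
Proof. intros Hx Hz [p [q [Hq E]]]. apply Hx. exists p, (q * z)%Z. split; [lia|].
 rewrite mult_IZR. apply not_0_IZR in Hz. apply not_0_IZR in Hq.
 apply (Rmult_eq_reg_l (IZR z)); auto. rewrite E. field. auto. Qed.

Lemma irr_mulN x n : irr x -> (n <> 0)%nat -> irr (INR n * x).
Proof. intros. rewrite INR_IZR_INZ. apply irr_mulZ; auto. lia. Qed.

Lemma irr_mulN_r x n : irr x -> (n <> 0)%nat -> irr (x * INR n).
Proof. intros. rewrite Rmult_comm. apply irr_mulN; auto. Qed.

Lemma irr_pow x q k : irr x -> (1 <= q)%nat -> irr (x * INR q ^ k).
Proof. intros. rewrite <- pow_INR. apply irr_mulN_r; auto. apply Nat.pow_nonzero. lia. Qed.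

Lemma sin_irr c : irr c -> sin (PI * c) <> 0.
Proof. intros Hc E. apply sin_eq_0_0 in E. destruct E as [k Ek]. apply Hc. exists k, 1%Z.
 split; [lia|]. assert (PI <> 0) by (pose proof PI_RGT_0; lra).
 apply (Rmult_eq_reg_l PI); auto. rewrite Ek. simpl. field. Qed.

Lemma nat_above r : exists n : nat, r <= INR n.
Proof. destruct (INR_archimed 1 r) as [n Hn]; [lra|]. exists n. lra. Qed.

Lemma cos_lin_bound a phi N : sin a <> 0 ->
  Rabs (sm N (fun n => cos (2 * a * INR n + phi))) <= 1 / Rabs (sin a).
Proof. intros Ha.
 set (F := fun n : nat => sin (2 * a * INR n + phi - a)).
 assert (E: 2 * sin a * sm N (fun n => cos (2 * a * INR n + phi)) = F N - F O).
 { rewrite <- sm_telescope, <- sm_scal. apply sm_ext. intros n _. unfold F.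
   rewrite S_INR. replace (2 * a * (INR n + 1) + phi - a) with ((2 * a * INR n + phi) + a) by ring.
   replace (2 * a * INR n + phi - a) with ((2 * a * INR n + phi) - a) by ring.
   rewrite sin_plus, sin_minus. ring. }
 assert (HF: Rabs (F N - F O) <= 2).
 { unfold F. pose proof (SIN_bound (2 * a * INR N + phi - a)). pose proof (SIN_bound (2 * a * INR 0 + phi - a)).
   unfold Rabs; destruct Rcase_abs; lra. }
 assert (Hs: 0 < Rabs (sin a)) by (apply Rabs_pos_lt; auto).
 rewrite <- E in HF. rewrite !Rabs_mult in HF. rewrite Rabs_right in HF by lra.
 apply (Rmult_le_reg_l (Rabs (sin a))); auto. field_simplify; lra. Qed.

Lemma unif_thresh (P : nat -> nat -> Prop) H :
  (forall k, (1 <= k < H)%nat -> exists N0, forall N, (N0 <= N)%nat -> P k N) ->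
  exists N0, forall k N, (1 <= k < H)%nat -> (N0 <= N)%nat -> P k N.
Proof. induction H as [|H IH]; intros Hk.
 - exists O. intros; lia.
 - destruct IH as [N1 HN1]. { intros; apply Hk; lia. }
   destruct (Nat.eq_dec H 0) as [->|HH].
   + exists N1. intros. lia.
   + destruct (Hk H) as [N2 HN2]; [lia|]. exists (N1 + N2)%nat. intros k N Hk' HN.
     destruct (Nat.eq_dec k H) as [->|]. apply HN2; lia. apply HN1; lia. Qed.

Lemma sm_indic H h N : (h < H)%nat -> sm H (fun h' => if Nat.eqb h h' then N else 0) = N.
Proof. induction H as [|H IH]; intros Hh; [lia|]. simpl.
 destruct (Nat.eq_dec h H) as [->|Hn].
 - rewrite Nat.eqb_refl. rewrite (sm_ext H _ (fun _ => 0)).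
   + rewrite sm_const; ring.
   + intros n Hn. destruct (Nat.eqb_spec H n); [lia|auto].
 - rewrite IH by lia. destruct (Nat.eqb_spec h H); [lia|ring]. Qed.

Lemma shift_part (g : nat -> R) H N : (forall n, Rabs (g n) <= 1) ->
  Rabs (INR H * sm N g - sm N (fun n => sm H (fun h => g (n + h)%nat))) <= 2 * INR H ^ 2.
Proof. intros Hg.
 rewrite (sm_swap N H (fun n h => g (n + h)%nat)).
 rewrite <- sm_const, <- sm_minus.
 eapply Rle_trans. apply (sm_abs_bound H _ (2 * INR H)).
 - intros h Hh. rewrite Rabs_minus_sym. eapply Rle_trans. apply (sm_shift_bound N h g 1 Hg).
   assert (INR h <= INR H) by (apply le_INR; lia). lra.
 - simpl. lra. Qed.

Lemma sq_sum_cos (a : nat -> R) H :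
  (sm H (fun h => cos (a h)))^2 + (sm H (fun h => sin (a h)))^2 =
  sm H (fun h => sm H (fun h' => cos (a h - a h'))).
Proof. rewrite <- !Rsqr_pow2. unfold Rsqr. rewrite !sm_mul_sm. rewrite <- sm_add.
 apply sm_ext. intros h _. rewrite <- sm_add. apply sm_ext. intros h' _. rewrite cos_minus. ring. Qed.

Lemma vdC (th : nat -> R) H N B : (1 <= H)%nat -> 0 <= B ->
  (forall k, (1 <= k < H)%nat -> Rabs (sm N (fun n => cos (th (n + k)%nat - th n))) <= B) ->
  (INR H)^2 * (sm N (fun n => cos (th n)))^2 <=
    2 * INR N * (INR H * INR N + (INR H)^2 * (B + 2 * INR H)) + 16 * (INR H)^4.
Proof. intros HH HB Hk.
 set (S := sm N (fun n => cos (th n))). set (S' := sm N (fun n => sin (th n))).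
 set (X := sm N (fun n => sm H (fun h => cos (th (n + h)%nat)))).
 set (Y := sm N (fun n => sm H (fun h => sin (th (n + h)%nat)))).
 assert (E1: Rabs (INR H * S - X) <= 2 * INR H ^ 2) by (apply (shift_part (fun n => cos (th n))); intros; apply Rabs_le; apply COS_bound).
 assert (E2: Rabs (INR H * S' - Y) <= 2 * INR H ^ 2) by (apply (shift_part (fun n => sin (th n))); intros; apply Rabs_le; apply SIN_bound).
 assert (C1: X^2 <= INR N * sm N (fun n => (sm H (fun h => cos (th (n + h)%nat)))^2)) by apply sm_CS.
 assert (C2: Y^2 <= INR N * sm N (fun n => (sm H (fun h => sin (th (n + h)%nat)))^2)) by apply sm_CS.
 assert (Q: sm N (fun n => (sm H (fun h => cos (th (n + h)%nat)))^2) + sm N (fun n => (sm H (fun h => sin (th (n + h)%nat)))^2)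
    <= INR H * INR N + (INR H)^2 * (B + 2 * INR H)).
 { rewrite <- sm_add.
   rewrite (sm_ext N _ (fun n => sm H (fun h => sm H (fun h' => cos (th (n + h)%nat - th (n + h')%nat)))))
     by (intros n _; apply (sq_sum_cos (fun h => th (n + h)%nat))).
   rewrite sm_swap. rewrite (sm_ext H _ (fun h => sm H (fun h' => sm N (fun n => cos (th (n + h)%nat - th (n + h')%nat)))))
     by (intros; apply sm_swap).
   eapply Rle_trans. apply (sm_le H _ (fun h => sm H (fun h' => (if Nat.eqb h h' then INR N else 0) + (B + 2 * INR H)))).
   - intros h Hh. apply sm_le. intros h' Hh'.
     destruct (Nat.eqb_spec h h') as [<-|Hne].
     + rewrite (sm_ext N _ (fun _ => 1)) by (intros; rewrite Rminus_diag; apply cos_0).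
       rewrite sm_const. pose proof (pos_INR H). lra.
     + assert (Hsh: forall u v, (u < H)%nat -> (v < u)%nat -> Rabs (sm N (fun n => cos (th (n + u)%nat - th (n + v)%nat))) <= B + 2 * INR H).
       { intros u v Hu Hvu.
         set (g := fun m => cos (th (m + (u - v))%nat - th m)).
         rewrite (sm_ext N _ (fun n => g (n + v)%nat)) by (intros n _; unfold g; cbv beta; replace (n + v + (u - v))%nat with (n + u)%nat by lia; reflexivity).
         pose proof (sm_shift_bound N v g 1 ltac:(intros; unfold g; apply Rabs_le; apply COS_bound)).
         pose proof (Hk (u - v)%nat ltac:(lia)). fold g in H1.
         assert (INR v <= INR H) by (apply le_INR; lia).
         revert H0 H1 H2. generalize (sm N (fun n => g (n + v)%nat)) (sm N g). intros a b Ha Hb Hc.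
         unfold Rabs in *. repeat destruct Rcase_abs; lra. }
       change ((if false then INR N else 0) + (B + 2 * INR H)) with (0 + (B + 2 * INR H)). rewrite Rplus_0_l.
       destruct (Nat.lt_total h' h) as [Hlt|[Heq|Hgt]]; [| lia |].
       * eapply Rle_trans; [apply Rle_abs|]. apply Hsh; auto.
       * rewrite (sm_ext N _ (fun n => cos (th (n + h')%nat - th (n + h)%nat))) by (intros; rewrite <- cos_neg; f_equal; ring).
         eapply Rle_trans; [apply Rle_abs|]. apply Hsh; auto.
   - rewrite (sm_ext H _ (fun h => INR N + INR H * (B + 2 * INR H))).
     + rewrite sm_const. lra.
     + intros h Hh. rewrite sm_add, sm_indic, sm_const; auto. }
 assert (Sq: forall z M, Rabs z <= M -> z^2 <= M^2).
 { intros z M Hz. rewrite <- pow2_abs. pose proof (Rabs_pos z). nra. }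
 apply Sq in E1. apply Sq in E2.
 assert (HS: (INR H * S)^2 <= 2 * X^2 + 2 * (INR H * S - X)^2) by (pose proof (pow2_ge_0 (INR H * S - 2 * X)); nra).
 assert (HS': (INR H * S')^2 <= 2 * Y^2 + 2 * (INR H * S' - Y)^2) by (pose proof (pow2_ge_0 (INR H * S' - 2 * Y)); nra).
 assert (0 <= (INR H * S')^2) by apply pow2_ge_0.
 assert (HN: 0 <= INR N) by apply pos_INR.
 assert (INR N * (sm N (fun n => (sm H (fun h => cos (th (n + h)%nat)))^2) + sm N (fun n => (sm H (fun h => sin (th (n + h)%nat)))^2))
    <= INR N * (INR H * INR N + (INR H)^2 * (B + 2 * INR H))) by (apply Rmult_le_compat_l; auto).
 replace ((INR H)^2 * S^2) with ((INR H * S)^2) by ring.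
 replace (16 * INR H ^ 4) with (2 * (2 * INR H ^ 2)^2 + 2 * (2 * INR H ^ 2)^2) by ring.
 nra. Qed.

Lemma W_base c f : irr c -> Lead 1 c f -> forall eps, 0 < eps ->
  exists N0, forall N, (N0 <= N)%nat -> Rabs (sm N (fun n => cos (2 * PI * f n))) <= eps * INR N.
Proof. intros Hc Hf eps He. unfold Lead in Hf. simpl in Hf.
 pose proof (sin_irr c Hc) as Hs.
 assert (Hp: 0 < Rabs (sin (PI * c))) by (apply Rabs_pos_lt; auto).
 destruct (nat_above (1 / Rabs (sin (PI * c)) / eps)) as [N0 HN0].
 exists N0. intros N HN.
 rewrite (sm_ext N _ (fun n => cos (2 * (PI * c) * INR n + 2 * PI * f O))).
 - eapply Rle_trans. apply cos_lin_bound; auto.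
   assert (INR N0 <= INR N) by (apply le_INR; auto).
   apply (Rmult_le_reg_r (/ eps)). apply Rinv_0_lt_compat; auto.
   replace (eps * INR N * / eps) with (INR N) by (field; lra). unfold Rdiv in HN0. lra.
 - intros n _. f_equal. specialize (Hf n). simpl in Hf. rewrite Rmult_1_r in Hf. 
   replace (f n) with (f O + c * INR n) by lra. ring. Qed.

Lemma W D : (1 <= D)%nat -> forall c f, irr c -> Lead D c f -> forall eps, 0 < eps ->
  exists N0, forall N, (N0 <= N)%nat -> Rabs (sm N (fun n => cos (2 * PI * f n))) <= eps * INR N.
Proof. intros HD. induction D as [|D IH]; [lia|]. destruct D as [|D].
 - apply W_base.
 - intros c f Hc Hf eps0 He0. specialize (IH ltac:(lia)).
   set (e := eps0^2 / 8).
   assert (He: 0 < e) by (unfold e; nra).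
   destruct (nat_above (8 / eps0^2 + 1)) as [H HH].
   assert (HpH: 0 < 8 / eps0 ^ 2) by (apply Rdiv_lt_0_compat; [lra|apply pow_lt; lra]).
   assert (H1: (1 <= H)%nat). { destruct H as [|H']; [change (INR 0) with 0 in HH; lra | lia]. }
   assert (HHpos: 0 < INR H) by (apply lt_0_INR; lia).
   destruct (unif_thresh (fun k N => Rabs (sm N (fun n => cos (2 * PI * (f (n + k)%nat - f n)))) <= e * INR N) H) as [N1 HN1].
   { intros k Hk. apply (IH (c * INR (S (S D)) * INR k)).
     - apply irr_mulN_r. apply irr_mulN_r; auto. lia.
     - apply Lead_diff; auto.
     - auto. }
   destruct (nat_above (16 * INR H / eps0^2 + 8 * INR H / eps0)) as [N2 HN2].
   exists (N1 + N2 + 1)%nat. intros N HN.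
   assert (HNpos: 0 < INR N) by (apply lt_0_INR; lia).
   assert (HN2': INR N2 <= INR N) by (apply le_INR; lia).
   pose proof (vdC (fun n => 2 * PI * f n) H N (e * INR N) H1 ltac:(nra)) as V.
   assert (Hb: forall k, (1 <= k < H)%nat -> Rabs (sm N (fun n => cos ((fun n => 2 * PI * f n) (n + k)%nat - (fun n => 2 * PI * f n) n))) <= e * INR N).
   { intros k Hk. rewrite (sm_ext N _ (fun n => cos (2 * PI * (f (n + k)%nat - f n)))) by (intros; f_equal; ring).
     apply HN1; auto; lia. }
   specialize (V Hb). cbv beta in V.
   set (S := sm N (fun n => cos (2 * PI * f n))) in *.
   assert (V2: S^2 <= 2 * INR N ^ 2 / INR H + 2 * e * INR N ^ 2 + 4 * INR H * INR N + 16 * INR H ^ 2).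
   { apply (Rmult_le_reg_l (INR H ^ 2)). nra.
     eapply Rle_trans. exact V. right. field. lra. }
   assert (T1: 2 * INR N ^ 2 / INR H <= eps0^2 / 4 * INR N ^ 2).
   { assert (8 / eps0^2 <= INR H) by lra.
     assert (eps0^2 * INR H >= 8).
     { apply Rle_ge. apply (Rmult_le_reg_r (/ eps0^2)). apply Rinv_0_lt_compat; nra.
       replace (eps0 ^ 2 * INR H * / eps0 ^ 2) with (INR H) by (field; lra). unfold Rdiv in *. lra. }
     apply (Rmult_le_reg_r (INR H)); auto. unfold Rdiv. rewrite Rmult_assoc, Rinv_l by lra. nra. }
   assert (T2: 4 * INR H * INR N <= eps0^2 / 4 * INR N ^ 2).
   { assert (16 * INR H / eps0^2 <= INR N).
     { assert (0 <= 8 * INR H / eps0) by (apply Rmult_le_pos; [lra| apply Rlt_le, Rinv_0_lt_compat; lra]). lra. }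
     assert (16 * INR H <= eps0^2 * INR N).
     { apply (Rmult_le_reg_r (/ eps0^2)). apply Rinv_0_lt_compat; nra.
       replace (eps0 ^ 2 * INR N * / eps0 ^ 2) with (INR N) by (field; lra). unfold Rdiv in *. lra. }
     nra. }
   assert (T3: 16 * INR H ^ 2 <= eps0^2 / 4 * INR N ^ 2).
   { assert (8 * INR H / eps0 <= INR N).
     { assert (0 <= 16 * INR H / eps0^2) by (apply Rmult_le_pos; [lra| apply Rlt_le, Rinv_0_lt_compat; nra]). lra. }
     assert (8 * INR H <= eps0 * INR N).
     { apply (Rmult_le_reg_r (/ eps0)). apply Rinv_0_lt_compat; nra.
       replace (eps0 * INR N * / eps0) with (INR N) by (field; lra). unfold Rdiv in *. lra. }
     nra. }
   assert (S^2 <= (eps0 * INR N)^2) by (unfold e in V2; nra).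
   rewrite <- !Rsqr_pow2 in H0. apply Rsqr_le_abs_0 in H0. rewrite (Rabs_right (eps0 * INR N)) in H0 by nra. auto. Qed.

Definition Avg (g : nat -> R) (c : R) := forall eps, 0 < eps ->
  exists N0, forall N, (N0 <= N)%nat -> Rabs (sm N g - c * INR N) <= eps * INR N.

Lemma Avg_ext g g' c : (forall n, g n = g' n) -> Avg g c -> Avg g' c.
Proof. intros E H eps He. destruct (H eps He) as [N0 HN]. exists N0. intros N HN'.
 rewrite <- (sm_ext N g g') by auto. auto. Qed.

Lemma Avg_const a : Avg (fun _ => a) a.
Proof. intros eps He. exists O. intros N _. rewrite sm_const.
 replace (INR N * a - a * INR N) with 0 by ring. rewrite Rabs_R0. pose proof (pos_INR N). nra. Qed.

Lemma Avg_add g1 g2 c1 c2 : Avg g1 c1 -> Avg g2 c2 -> Avg (fun n => g1 n + g2 n) (c1 + c2).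
Proof. intros H1 H2 eps He. destruct (H1 (eps/2)) as [N1 HN1]; [lra|]. destruct (H2 (eps/2)) as [N2 HN2]; [lra|].
 exists (N1 + N2)%nat. intros N HN. rewrite sm_add.
 specialize (HN1 N ltac:(lia)). specialize (HN2 N ltac:(lia)).
 replace (sm N g1 + sm N g2 - (c1 + c2) * INR N) with ((sm N g1 - c1 * INR N) + (sm N g2 - c2 * INR N)) by ring.
 eapply Rle_trans. apply Rabs_triang. lra. Qed.

Lemma Avg_scal g c a : Avg g c -> Avg (fun n => a * g n) (a * c).
Proof. intros H eps He. destruct (H (eps / (Rabs a + 1))) as [N0 HN].
 { apply Rdiv_lt_0_compat; auto. pose proof (Rabs_pos a); lra. }
 exists N0. intros N HN'. rewrite sm_scal.
 replace (a * sm N g - a * c * INR N) with (a * (sm N g - c * INR N)) by ring.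
 rewrite Rabs_mult. specialize (HN N HN').
 pose proof (Rabs_pos a). pose proof (pos_INR N). pose proof (Rabs_pos (sm N g - c * INR N)).
 assert (eps / (Rabs a + 1) * INR N * Rabs a <= eps * INR N).
 { unfold Rdiv. replace (eps * / (Rabs a + 1) * INR N * Rabs a) with (eps * INR N * (Rabs a / (Rabs a + 1))) by (field; lra).
   assert (Rabs a / (Rabs a + 1) <= 1). { apply (Rmult_le_reg_r (Rabs a + 1)); [lra|]. unfold Rdiv. rewrite Rmult_assoc, Rinv_l by lra. lra. }
   assert (0 <= eps * INR N) by nra. nra. }
 nra. Qed.

Lemma Avg_le g1 g2 c1 c2 : (forall n, g1 n <= g2 n) -> Avg g1 c1 -> Avg g2 c2 -> c1 <= c2.
Proof. intros Hle H1 H2. apply Rnot_lt_le. intros Hlt.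
 set (eps := (c1 - c2) / 4).
 destruct (H1 eps) as [N1 HN1]; [unfold eps; lra|]. destruct (H2 eps) as [N2 HN2]; [unfold eps; lra|].
 set (N := (N1 + N2 + 1)%nat).
 specialize (HN1 N ltac:(unfold N; lia)). specialize (HN2 N ltac:(unfold N; lia)).
 assert (sm N g1 <= sm N g2) by (apply sm_le; auto).
 assert (0 < INR N) by (apply lt_0_INR; unfold N; lia).
 assert (Hab: forall x e, Rabs x <= e -> -e <= x <= e) by (intros x e Hx; unfold Rabs in Hx; destruct Rcase_abs; lra).
 apply Hab in HN1. apply Hab in HN2. unfold eps in *. nra. Qed.

Lemma Avg_cosW D c f a al : (1 <= D)%nat -> irr c -> Lead D c f -> Avg (fun m => a * cos (2 * PI * f m + al)) 0.
Proof. intros HD Hc Hf.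
 assert (HP: PI <> 0) by (pose proof PI_RGT_0; lra).
 apply (Avg_ext (fun m => a * cos (2 * PI * (f m + al / (2 * PI))))); [intros; f_equal; f_equal; field; auto|].
 replace 0 with (a * 0) by ring. apply Avg_scal.
 intros eps He. destruct (W D HD c (fun m => f m + al / (2 * PI)) Hc) with (eps := eps) as [N0 HN]; auto.
 - apply Lead_add; auto. apply PD_const.
 - exists N0. intros N HN'. rewrite Rmult_0_l, Rminus_0_r. auto. Qed.

Definition term := (R * Z * Z * R)%type.
Definition evT (t : term) (u v : R) : R :=
  let '(a, j, l, al) := t in a * cos (2 * PI * (IZR j * u + IZR l * v) + al).
Definition evL (L : list term) u v := fold_right (fun t acc => evT t u v + acc) 0 L.
Definition mulT (t1 t2 : term) : list term :=
  let '(a1, j1, l1, al1) := t1 in let '(a2, j2, l2, al2) := t2 in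
  [(a1 * a2 / 2, (j1 + j2)%Z, (l1 + l2)%Z, al1 + al2); (a1 * a2 / 2, (j1 - j2)%Z, (l1 - l2)%Z, al1 - al2)].
Definition mulL (L1 L2 : list term) : list term :=
  flat_map (fun t1 => flat_map (fun t2 => mulT t1 t2) L2) L1.
Fixpoint powL (L : list term) (K : nat) : list term :=
  match K with O => [(1, 0%Z, 0%Z, 0)] | S K' => mulL L (powL L K') end.
Definition meanT (t : term) : R :=
  let '(a, j, l, al) := t in if (Z.eqb j 0 && Z.eqb l 0)%bool then a * cos al else 0.
Definition meanL (L : list term) := fold_right (fun t acc => meanT t + acc) 0 L.

Lemma evL_app L1 L2 u v : evL (L1 ++ L2) u v = evL L1 u v + evL L2 u v.
Proof. induction L1; simpl; [ring|]. rewrite IHL1; ring. Qed.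

Lemma evT_mul t1 t2 u v : evT t1 u v * evT t2 u v = evL (mulT t1 t2) u v.
Proof. destruct t1 as [[[a1 j1] l1] al1]. destruct t2 as [[[a2 j2] l2] al2]. simpl.
 rewrite !plus_IZR, !minus_IZR.
 set (x := 2 * PI * (IZR j1 * u + IZR l1 * v) + al1).
 set (y := 2 * PI * (IZR j2 * u + IZR l2 * v) + al2).
 replace (2 * PI * ((IZR j1 + IZR j2) * u + (IZR l1 + IZR l2) * v) + (al1 + al2)) with (x + y) by (unfold x, y; ring).
 replace (2 * PI * ((IZR j1 - IZR j2) * u + (IZR l1 - IZR l2) * v) + (al1 - al2)) with (x - y) by (unfold x, y; ring).
 rewrite cos_plus, cos_minus. field. Qed.

Lemma evL_mul1 t1 L2 u v : evL (flat_map (fun t2 => mulT t1 t2) L2) u v = evT t1 u v * evL L2 u v.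
Proof. induction L2 as [|t2 L2 IH2]; simpl; [ring|]. rewrite evL_app, IH2, <- evT_mul. ring. Qed.

Lemma evL_mul L1 L2 u v : evL (mulL L1 L2) u v = evL L1 u v * evL L2 u v.
Proof. induction L1 as [|t1 L1 IH]; simpl; [ring|]. unfold mulL in *. simpl. rewrite evL_app, IH.
 rewrite evL_mul1. ring. Qed.

Lemma evL_pow L K u v : evL (powL L K) u v = (evL L u v) ^ K.
Proof. induction K; simpl.
 - replace (2 * PI * (0 * u + 0 * v) + 0) with 0 by ring. rewrite cos_0. ring.
 - rewrite evL_mul, IHK. auto. Qed.

Lemma Avg_evL (Q P : nat -> R) L :
  (forall a j l al, In (a, j, l, al) L -> (j <> 0 \/ l <> 0)%Z ->
     Avg (fun m => a * cos (2 * PI * (IZR j * Q m + IZR l * P m) + al)) 0) ->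
  Avg (fun m => evL L (Q m) (P m)) (meanL L).
Proof. induction L as [|t L IH]; intros H; simpl.
 - apply Avg_const.
 - apply Avg_add.
   + destruct t as [[[a j] l] al]. simpl.
     destruct (Z.eqb_spec j 0); destruct (Z.eqb_spec l 0); simpl.
     * subst. apply (Avg_ext (fun _ => a * cos al)); [intros; f_equal; f_equal; ring|]. apply Avg_const.
     * apply (H a j l al); simpl; auto.
     * apply (H a j l al); simpl; auto.
     * apply (H a j l al); simpl; auto.
   + apply IH. intros; apply (H a j l al); simpl; auto. Qed.


Definition FB (J Lb : Z) (L : list term) := forall a j l al, In (a, j, l, al) L -> (Z.abs j <= J /\ Z.abs l <= Lb)%Z.

Lemma FB_mul J1 J2 L1b L2b L1 L2 : FB J1 L1b L1 -> FB J2 L2b L2 -> FB (J1 + J2) (L1b + L2b) (mulL L1 L2).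
Proof. intros H1 H2 a j l al Hin. unfold mulL in Hin. apply in_flat_map in Hin. destruct Hin as [t1 [Ht1 Hin]].
 apply in_flat_map in Hin. destruct Hin as [t2 [Ht2 Hin]].
 destruct t1 as [[[a1 j1] l1] al1]. destruct t2 as [[[a2 j2] l2] al2].
 specialize (H1 _ _ _ _ Ht1). specialize (H2 _ _ _ _ Ht2). simpl in Hin.
 destruct Hin as [E|[E|[]]]; inversion E; subst; lia. Qed.

Lemma FB_pow J Lb L K : (0 <= J)%Z -> (0 <= Lb)%Z -> FB J Lb L -> FB (Z.of_nat K * J) (Z.of_nat K * Lb) (powL L K).
Proof. intros HJ HL H. induction K.
 - intros a j l al Hin. simpl in Hin. destruct Hin as [E|[]]. inversion E; subst. simpl. lia.
 - intros a j l al Hin. change (In (a, j, l, al) (mulL L (powL L K))) in Hin.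
   pose proof (FB_mul _ _ _ _ _ _ H IHK a j l al Hin). lia. Qed.

Lemma tele_cos a phi N : 2 * sin a * sm N (fun n => cos (2 * a * INR n + phi)) =
   sin (2 * a * INR N + phi - a) - sin (phi - a).
Proof. set (F := fun n : nat => sin (2 * a * INR n + phi - a)).
 replace (sin (phi - a)) with (F O) by (unfold F; simpl; f_equal; ring).
 change (sin (2 * a * INR N + phi - a)) with (F N).
 rewrite <- sm_telescope, <- sm_scal. apply sm_ext. intros n _. unfold F.
 rewrite S_INR. replace (2 * a * (INR n + 1) + phi - a) with ((2 * a * INR n + phi) + a) by ring.
 replace (2 * a * INR n + phi - a) with ((2 * a * INR n + phi) - a) by ring.
 rewrite sin_plus, sin_minus. ring. Qed.

Lemma root_sum (M j : nat) g : (0 < j < M)%nat ->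
  sm M (fun p => cos (2 * PI * (INR j * (INR p / INR M)) + g)) = 0.
Proof. intros Hj. assert (HM: 0 < INR M) by (apply lt_0_INR; lia).
 assert (Hj0: 0 < INR j) by (apply lt_0_INR; lia).
 assert (HjM: INR j < INR M) by (apply lt_INR; lia).
 set (a := PI * INR j / INR M).
 assert (Ha: 0 < sin a).
 { apply sin_gt_0; unfold a. apply Rdiv_lt_0_compat; auto. apply Rmult_lt_0_compat; auto. apply PI_RGT_0.
   apply (Rmult_lt_reg_r (INR M)); auto. unfold Rdiv. rewrite Rmult_assoc, Rinv_l by lra.
   pose proof PI_RGT_0. nra. }
 rewrite (sm_ext M _ (fun n => cos (2 * a * INR n + g))) by (intros; unfold a; f_equal; field; lra).
 apply (Rmult_eq_reg_l (2 * sin a)); [|lra]. rewrite tele_cos.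
 replace (2 * a * INR M + g - a) with ((g - a) + 2 * INR j * PI) by (unfold a; field; lra).
 rewrite sin_period. ring. Qed.

Lemma root_sumZ (M : nat) (j : Z) g : (0 < Z.abs j < Z.of_nat M)%Z ->
  sm M (fun p => cos (2 * PI * (IZR j * (INR p / INR M)) + g)) = 0.
Proof. intros Hj. destruct (Z_lt_le_dec 0 j).
 - rewrite <- (Z2Nat.id j) by lia. rewrite <- INR_IZR_INZ. apply root_sum. lia.
 - rewrite (sm_ext M _ (fun p => cos (2 * PI * (INR (Z.to_nat (- j)) * (INR p / INR M)) + - g))).
   + apply root_sum. lia.
   + intros p _. rewrite (INR_IZR_INZ (Z.to_nat (- j))), Z2Nat.id by lia. rewrite opp_IZR. rewrite <- cos_neg. f_equal. ring. Qed.

Lemma sample_term M t u0 v0 : (1 <= M)%nat -> FB (Z.of_nat M - 1) (Z.of_nat M - 1) [t] ->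
  sm M (fun p => sm M (fun q => evT t (u0 + INR p / INR M) (v0 + INR q / INR M))) = INR M * INR M * meanT t.
Proof. intros HM Hfb. destruct t as [[[a j] l] al]. destruct (Hfb a j l al) as [Hj Hl]; [simpl; auto|].
 simpl. destruct (Z.eqb_spec j 0) as [->|Hj0]; destruct (Z.eqb_spec l 0) as [->|Hl0]; simpl.
 - rewrite (sm_ext M _ (fun _ => INR M * (a * cos al))).
   + rewrite sm_const. ring.
   + intros p _. rewrite (sm_ext M _ (fun _ => a * cos al)). apply sm_const.
     intros; f_equal; f_equal; ring.
 - rewrite (sm_ext M _ (fun _ => 0)). rewrite sm_const; ring.
   intros p _. rewrite sm_scal.
   rewrite (sm_ext M _ (fun q => cos (2 * PI * (IZR l * (INR q / INR M)) + (2 * PI * (IZR l * v0) + al)))).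
   + rewrite root_sumZ by lia. ring.
   + intros q _. f_equal. simpl. ring.
 - rewrite sm_swap. rewrite (sm_ext M _ (fun _ => 0)). rewrite sm_const; ring.
   intros q _. rewrite sm_scal.
   rewrite (sm_ext M _ (fun p => cos (2 * PI * (IZR j * (INR p / INR M)) + (2 * PI * (IZR j * u0) + al)))).
   + rewrite root_sumZ by lia. ring.
   + intros p _. f_equal. simpl. ring.
 - rewrite sm_swap. rewrite (sm_ext M _ (fun _ => 0)). rewrite sm_const; ring.
   intros q _. rewrite sm_scal.
   rewrite (sm_ext M _ (fun p => cos (2 * PI * (IZR j * (INR p / INR M)) + (2 * PI * (IZR j * u0 + IZR l * (v0 + INR q / INR M)) + al)))).
   + rewrite root_sumZ by lia. ring.
   + intros p _. f_equal. ring. Qed.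

Lemma samp L M u0 v0 : (1 <= M)%nat -> FB (Z.of_nat M - 1) (Z.of_nat M - 1) L ->
  sm M (fun p => sm M (fun q => evL L (u0 + INR p / INR M) (v0 + INR q / INR M))) = INR M * INR M * meanL L.
Proof. intros HM. induction L as [|t L IH]; intros Hfb; simpl.
 - rewrite (sm_ext M _ (fun _ => 0)). rewrite sm_const; ring.
   intros; rewrite sm_const; ring.
 - rewrite (sm_ext M _ (fun p => sm M (fun q => evT t (u0 + INR p / INR M) (v0 + INR q / INR M))
        + sm M (fun q => evL L (u0 + INR p / INR M) (v0 + INR q / INR M)))) by (intros; apply sm_add).
   rewrite sm_add. rewrite sample_term, IH; auto.
   + ring.
   + intros a j l al Hin. apply (Hfb a j l al). simpl; auto.
   + intros a j l al Hin. apply (Hfb a j l al). destruct Hin as [E|[]]. simpl; auto. Qed.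

Definition baseA u0 : list term := [(1/2, 0%Z, 0%Z, 0); (1/2, 1%Z, 0%Z, - (2 * PI * u0))].
Definition baseB v0 : list term := [(1/2, 0%Z, 0%Z, 0); (1/2, 0%Z, 1%Z, - (2 * PI * v0))].

Lemma cos_sq_half x : cos x ^ 2 = 1/2 + 1/2 * cos (2 * x).
Proof. rewrite cos_2a_cos. field. Qed.

Lemma evA u0 u v : evL (baseA u0) u v = cos (PI * (u - u0)) ^ 2.
Proof. unfold baseA, evL; simpl. 
 replace (2 * PI * (0 * u + 0 * v) + 0) with 0 by ring. rewrite cos_0.
 replace (2 * PI * (1 * u + 0 * v) + - (2 * PI * u0)) with (2 * (PI * (u - u0))) by ring. rewrite (cos_2a_cos (PI * (u - u0))). field. Qed.

Lemma evB v0 u v : evL (baseB v0) u v = cos (PI * (v - v0)) ^ 2.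
Proof. unfold baseB, evL; simpl. 
 replace (2 * PI * (0 * u + 0 * v) + 0) with 0 by ring. rewrite cos_0.
 replace (2 * PI * (0 * u + 1 * v) + - (2 * PI * v0)) with (2 * (PI * (v - v0))) by ring. rewrite (cos_2a_cos (PI * (v - v0))). field. Qed.

Lemma FB_A u0 : FB 1 0 (baseA u0).
Proof. intros a j l al Hin. simpl in Hin. destruct Hin as [E|[E|[]]]; inversion E; subst; simpl; lia. Qed.
Lemma FB_B v0 : FB 0 1 (baseB v0).
Proof. intros a j l al Hin. simpl in Hin. destruct Hin as [E|[E|[]]]; inversion E; subst; simpl; lia. Qed.

Lemma cos_sq_kpi x k : cos (x + IZR k * PI) ^ 2 = cos x ^ 2.
Proof. rewrite cos_plus. rewrite (sin_eq_0_1 (IZR k * PI)) by (exists k; auto).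
 pose proof (sin2_cos2 (IZR k * PI)). rewrite (sin_eq_0_1 (IZR k * PI)) in H by (exists k; auto).
 unfold Rsqr in H. replace (cos x * cos (IZR k * PI) - sin x * 0) with (cos x * cos (IZR k * PI)) by ring.
 rewrite Rpow_mult_distr. replace (cos (IZR k * PI) ^ 2) with 1 by (simpl; lra). ring. Qed.

Lemma cos2_far w eta : 0 < eta <= 1/2 -> (forall k, eta <= Rabs (w - IZR k)) ->
  cos (PI * w) ^ 2 <= cos (PI * eta) ^ 2.
Proof. intros He Hk. set (k := Int_part w). set (t := frac_part w).
 assert (Ew: w = IZR k + t) by apply Rplus_Int_part_frac_part.
 pose proof (base_fp w) as [Ht0 Ht1]. fold t in Ht0, Ht1.
 pose proof (Hk k) as H1. pose proof (Hk (k + 1)%Z) as H2. rewrite plus_IZR in H2.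
 rewrite Ew in H1, H2. replace (IZR k + t - IZR k) with t in H1 by ring.
 replace (IZR k + t - (IZR k + 1)) with (t - 1) in H2 by ring.
 rewrite Rabs_right in H1 by lra. rewrite Rabs_left in H2 by lra.
 replace (PI * w) with (PI * t + IZR k * PI) by (rewrite Ew; ring). rewrite cos_sq_kpi.
 pose proof PI_RGT_0.
 assert (Hc: forall s, eta <= s <= 1/2 -> 0 <= cos (PI * s) <= cos (PI * eta)).
 { intros s Hs. split. apply cos_ge_0; nra.
   destruct (Req_dec s eta) as [->|Hne]; [lra|]. left. apply cos_decreasing_1; nra. }
 destruct (Rle_dec t (1/2)).
 - destruct (Hc t); [lra|]. nra.
 - replace (PI * t) with (PI - PI * (1 - t)) by ring. rewrite Rtrigo_facts.cos_pi_minus.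
   destruct (Hc (1 - t)); [lra|]. nra. Qed.

Lemma q_range eta : 0 < eta <= 1/2 -> 0 <= cos (PI * eta) ^ 2 < 1.
Proof. intros He. pose proof PI_RGT_0.
 assert (0 <= cos (PI * eta)) by (apply cos_ge_0; nra).
 assert (cos (PI * eta) < 1) by (rewrite <- cos_0; apply cos_decreasing_1; nra).
 split; nra. Qed.

Lemma bernoulli r L : 0 <= r -> 1 + INR L * r <= (1 + r) ^ L.
Proof. intros Hr. induction L; [simpl; lra|]. rewrite S_INR. change ((1+r)^(S L)) with ((1+r) * (1+r)^L).
 assert (1 <= (1+r)^L) by (apply pow_R1_Rle; lra). nra. Qed.

Lemma K_choice q : 0 <= q < 1 -> exists K, 2 * q ^ K * (INR K + 1) ^ 2 < 1.
Proof. intros Hq. set (q' := (q + 1) / 2). assert (Hq': 1/2 <= q' < 1) by (unfold q'; lra).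
 set (r := 1 / q' - 1). assert (Hr: 0 < r).
 { unfold r. assert (1 / q' > 1). { apply (Rmult_lt_reg_r q'); [lra|]. unfold Rdiv. rewrite Rmult_assoc, Rinv_l by lra. lra. } lra. }
 destruct (nat_above (33 / r ^ 3 + 1)) as [L HL].
 assert (Hr3: 0 < r ^ 3) by (apply pow_lt; auto).
 assert (HL1: 1 <= INR L) by (assert (0 < 33 / r^3) by (apply Rdiv_lt_0_compat; lra); lra).
 assert (HLr: 33 <= INR L * r ^ 3).
 { apply (Rmult_le_reg_r (/ r^3)). apply Rinv_0_lt_compat; auto.
   rewrite Rmult_assoc, Rinv_r by lra. unfold Rdiv in HL. lra. }
 exists (3 * L)%nat.
 assert (Hx: q ^ L * (1 + INR L * r) <= 1).
 { assert (q ^ L <= q' ^ L) by (apply pow_incr; unfold q'; lra).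
   assert (E: q' * (1 + r) = 1) by (unfold r; field; lra).
   assert (q' ^ L * (1 + r) ^ L = 1) by (rewrite <- Rpow_mult_distr, E; apply pow1).
   pose proof (bernoulli r L ltac:(lra)).
   assert (0 <= q ^ L) by (apply pow_le; lra). assert (0 <= q' ^ L) by (apply pow_le; lra).
   assert (0 <= 1 + INR L * r) by (pose proof (pos_INR L); nra).
   apply Rle_trans with (q' ^ L * (1 + INR L * r)). apply Rmult_le_compat_r; lra.
   rewrite <- H0. apply Rmult_le_compat_l; lra. }
 replace (3 * L)%nat with (L * 3)%nat by lia. rewrite pow_mult, mult_INR.
 replace (INR 3) with 3 by (simpl; ring). replace (INR L * 3) with (3 * INR L) by ring.
 set (x := q ^ L) in *. assert (0 <= x) by (apply pow_le; lra).
 set (y := INR L * r) in *. assert (Hy: 33 * INR L ^ 2 <= y ^ 3).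
 { unfold y. rewrite Rpow_mult_distr. replace (INR L ^ 3) with (INR L * INR L ^ 2) by ring.
   assert (0 <= INR L ^ 2) by apply pow2_ge_0. nra. }
 assert (x * y <= 1) by nra.
 assert (x ^ 3 * y ^ 3 <= 1). { replace (x ^ 3 * y ^ 3) with ((x * y) ^ 3) by ring. assert (0 <= x*y) by (apply Rmult_le_pos; [lra|unfold y; apply Rmult_le_pos; [apply pos_INR|lra]]). 
   replace 1 with (1 ^ 3) by ring. apply pow_incr. lra. }
 assert (2 * (3 * INR L + 1) ^ 2 < 33 * INR L ^ 2) by nra.
 assert (0 <= x ^ 3) by (apply pow_le; auto).
 assert (0 < y) by (unfold y; nra).
 assert (x ^ 3 * (2 * (3 * INR L + 1) ^ 2) <= x ^ 3 * (33 * INR L ^ 2)) by (apply Rmult_le_compat_l; lra).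
 assert (x ^ 3 * (33 * INR L ^ 2) <= x ^ 3 * y ^ 3) by (apply Rmult_le_compat_l; lra).
 destruct (Req_dec x 0) as [->|Hx0].
 - simpl. lra.
 - assert (0 < x ^ 3) by (apply pow_lt; lra).
   assert (x ^ 3 * (2 * (3 * INR L + 1) ^ 2) < x ^ 3 * (33 * INR L ^ 2)) by (apply Rmult_lt_compat_l; lra).
   nra. Qed.

Lemma FB_mono J J' Lb Lb' L : (J <= J')%Z -> (Lb <= Lb')%Z -> FB J Lb L -> FB J' Lb' L.
Proof. intros H1 H2 H a j l al Hin. destruct (H a j l al Hin). lia. Qed.

Lemma sm_ge_first M g : (1 <= M)%nat -> (forall n, 0 <= g n) -> g O <= sm M g.
Proof. intros HM Hg. induction M; [lia|]. simpl. destruct M.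
 - simpl. lra.
 - assert (g O <= sm (S M) g) by (apply IHM; lia). pose proof (Hg (S M)). lra. Qed.

Lemma evLA_val u0 K u v : evL (powL (baseA u0) K) u v = (cos (PI * (u - u0)) ^ 2) ^ K.
Proof. rewrite evL_pow, evA. auto. Qed.
Lemma evLB_val v0 K u v : evL (powL (baseB v0) K) u v = (cos (PI * (v - v0)) ^ 2) ^ K.
Proof. rewrite evL_pow, evB. auto. Qed.

Lemma c2_range x : 0 <= cos x ^ 2 <= 1.
Proof. pose proof (COS_bound x). split. apply pow2_ge_0. nra. Qed.

Lemma powK_range y K : 0 <= y <= 1 -> 0 <= y ^ K <= 1.
Proof. intros Hy. split. apply pow_le; lra. replace 1 with (1 ^ K) by apply pow1. apply pow_incr; lra. Qed.

Lemma far_pow w u0 eta K : 0 < eta <= 1/2 -> (forall k, eta <= Rabs (w - u0 - IZR k)) ->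
  (cos (PI * (w - u0)) ^ 2) ^ K <= (cos (PI * eta) ^ 2) ^ K.
Proof. intros He Hk. apply pow_incr. split. apply pow2_ge_0. apply cos2_far; auto.
 Qed.

Lemma not_hit x u0 eta : ~ (exists k, Rabs (x - u0 - IZR k) < eta) -> forall k, eta <= Rabs (x - u0 - IZR k).
Proof. intros H k. apply Rnot_lt_le. intros Hl. apply H. exists k. auto. Qed.

Lemma mean_lower L K u0 v0 : FB (Z.of_nat K) (Z.of_nat K) L -> (forall u v, 0 <= evL L u v) ->
  1 <= evL L u0 v0 -> 1 <= (INR K + 1) ^ 2 * meanL L.
Proof. intros Hfb Hpos H1.
 pose proof (samp L (S K) u0 v0 ltac:(lia) ltac:(eapply FB_mono; [| |exact Hfb]; lia)) as E.
 assert (HK: 0 < INR (S K)) by (apply lt_0_INR; lia).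
 assert (evL L (u0 + INR 0 / INR (S K)) (v0 + INR 0 / INR (S K)) <=
   sm (S K) (fun p => sm (S K) (fun q => evL L (u0 + INR p / INR (S K)) (v0 + INR q / INR (S K))))).
 { eapply Rle_trans; [|apply sm_ge_first]. apply (sm_ge_first (S K) (fun q => evL L (u0 + INR 0 / INR (S K)) (v0 + INR q / INR (S K)))).
   lia. intros; auto. lia. intros n. apply sm_nonneg. intros; auto. }
 rewrite E in H.
 change (INR 0) with 0 in H. unfold Rdiv in H. rewrite !Rmult_0_l, !Rplus_0_r in H.
 rewrite <- S_INR. replace (INR (S K) ^ 2) with (INR (S K) * INR (S K)) by ring. lra. Qed.

Lemma hit2 (Q P : nat -> R) u0 v0 eta : 0 < eta <= 1/2 ->
  (forall j l, (j <> 0 \/ l <> 0)%Z -> forall a al, Avg (fun m => a * cos (2 * PI * (IZR j * Q m + IZR l * P m) + al)) 0) ->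
  exists m, (exists k, Rabs (Q m - u0 - IZR k) < eta) /\ (exists k, Rabs (P m - v0 - IZR k) < eta).
Proof. intros He HW. apply NNPP. intros Hno.
 set (q := cos (PI * eta) ^ 2). destruct (q_range eta He) as [Hq0 Hq1]. fold q in Hq0, Hq1.
 destruct (K_choice q) as [K HK]; [lra|].
 set (LA := powL (baseA u0) K). set (LB := powL (baseB v0) K). set (LF := mulL LA LB).
 assert (AF: Avg (fun m => evL LF (Q m) (P m)) (meanL LF)) by (apply Avg_evL; intros; apply HW; auto).
 assert (AA: Avg (fun m => evL LA (Q m) (P m)) (meanL LA)) by (apply Avg_evL; intros; apply HW; auto).
 assert (AB: Avg (fun m => evL LB (Q m) (P m)) (meanL LB)) by (apply Avg_evL; intros; apply HW; auto).
 assert (RA: forall u v, 0 <= evL LA u v <= 1) by (intros; unfold LA; rewrite evLA_val; apply powK_range, c2_range).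
 assert (RB: forall u v, 0 <= evL LB u v <= 1) by (intros; unfold LB; rewrite evLB_val; apply powK_range, c2_range).
 assert (EF: forall u v, evL LF u v = evL LA u v * evL LB u v) by (intros; unfold LF; apply evL_mul).
 assert (Hpt: forall m, evL LF (Q m) (P m) <= q ^ K * (evL LA (Q m) (P m) + evL LB (Q m) (P m))).
 { intros m. rewrite EF. destruct (RA (Q m) (P m)). destruct (RB (Q m) (P m)).
   assert (0 <= q ^ K) by (apply pow_le; lra).
   destruct (classic (exists k, Rabs (Q m - u0 - IZR k) < eta)) as [HQ|HQ].
   - assert (HP: ~ exists k, Rabs (P m - v0 - IZR k) < eta) by (intros HP; apply Hno; exists m; auto).
     assert (evL LB (Q m) (P m) <= q ^ K) by (unfold LB; rewrite evLB_val; apply far_pow; auto; apply not_hit; auto).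
     nra.
   - assert (evL LA (Q m) (P m) <= q ^ K) by (unfold LA; rewrite evLA_val; apply far_pow; auto; apply not_hit; auto).
     nra. }
 assert (M1: meanL LF <= q ^ K * (meanL LA + meanL LB)).
 { apply (Avg_le _ _ _ _ Hpt AF). apply Avg_scal. apply Avg_add; auto. }
 assert (MA: meanL LA <= 1) by (apply (Avg_le _ (fun _ => 1) _ _ (fun m => proj2 (RA (Q m) (P m))) AA (Avg_const 1))).
 assert (MB: meanL LB <= 1) by (apply (Avg_le _ (fun _ => 1) _ _ (fun m => proj2 (RB (Q m) (P m))) AB (Avg_const 1))).
 assert (ML: 1 <= (INR K + 1) ^ 2 * meanL LF).
 { apply (mean_lower LF K u0 v0).
   - unfold LF, LA, LB. eapply FB_mono; [| |apply FB_mul; apply FB_pow; [| |apply FB_A| | |apply FB_B]]; lia.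
   - intros; rewrite EF. destruct (RA u v), (RB u v). nra.
   - rewrite EF. unfold LA, LB. rewrite evLA_val, evLB_val. rewrite !Rminus_diag, !Rmult_0_r, cos_0. replace (1 ^ 2) with 1 by ring. rewrite !pow1. lra. }
 assert (0 <= q ^ K) by (apply pow_le; lra).
 assert (0 <= (INR K + 1)^2) by apply pow2_ge_0.
 assert ((INR K + 1) ^ 2 * meanL LF <= (INR K + 1) ^ 2 * (q ^ K * 2)).
 { apply Rmult_le_compat_l; auto. nra. }
 lra. Qed.

Lemma hit1 (Q : nat -> R) u0 eta : 0 < eta <= 1/2 ->
  (forall j, (j <> 0)%Z -> forall a al, Avg (fun m => a * cos (2 * PI * (IZR j * Q m) + al)) 0) ->
  exists m k, Rabs (Q m - u0 - IZR k) < eta.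
Proof. intros He HW. apply NNPP. intros Hno.
 set (q := cos (PI * eta) ^ 2). destruct (q_range eta He) as [Hq0 Hq1]. fold q in Hq0, Hq1.
 destruct (K_choice q) as [K HK]; [lra|].
 set (LA := powL (baseA u0) K).
 assert (FA: FB (Z.of_nat K * 1) (Z.of_nat K * 0) LA) by (apply FB_pow; [lia|lia|apply FB_A]).
 assert (AA: Avg (fun m => evL LA (Q m) 0) (meanL LA)).
 { apply Avg_evL. intros a j l al Hin Hjl. destruct (FA a j l al Hin).
   assert (l = 0%Z) by lia. subst l. apply (Avg_ext (fun m => a * cos (2 * PI * (IZR j * Q m) + al))).
   - intros; f_equal; f_equal; simpl; ring.
   - apply HW. lia. }
 assert (RA: forall u v, 0 <= evL LA u v <= 1) by (intros; unfold LA; rewrite evLA_val; apply powK_range, c2_range).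
 assert (Hpt: forall m, evL LA (Q m) 0 <= q ^ K).
 { intros m. unfold LA; rewrite evLA_val; apply far_pow; auto; apply not_hit. intros [k Hk]. apply Hno. exists m, k; auto. }
 assert (M1: meanL LA <= q ^ K) by (apply (Avg_le _ _ _ _ Hpt AA (Avg_const _))).
 assert (ML: 1 <= (INR K + 1) ^ 2 * meanL LA).
 { apply (mean_lower LA K u0 0).
   - eapply FB_mono; [| |exact FA]; lia.
   - intros; apply RA.
   - unfold LA. rewrite evLA_val. rewrite !Rminus_diag, !Rmult_0_r, cos_0. replace (1 ^ 2) with 1 by ring. rewrite !pow1. lra. }
 assert (0 <= (INR K + 1)^2) by apply pow2_ge_0.
 assert ((INR K + 1) ^ 2 * meanL LA <= (INR K + 1) ^ 2 * q ^ K) by (apply Rmult_le_compat_l; auto).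
 assert (0 <= q ^ K) by (apply pow_le; lra).
 nra. Qed.

Definition isZ (v : R) := exists z : Z, v = IZR z.

Lemma isZ_IZR z : isZ (IZR z). Proof. exists z; auto. Qed.
Lemma isZ_INR n : isZ (INR n). Proof. exists (Z.of_nat n). apply INR_IZR_INZ. Qed.
Lemma isZ_add a b : isZ a -> isZ b -> isZ (a + b).
Proof. intros [x ->] [y ->]. exists (x + y)%Z. rewrite plus_IZR; auto. Qed.
Lemma isZ_opp a : isZ a -> isZ (- a).
Proof. intros [x ->]. exists (- x)%Z. rewrite opp_IZR; auto. Qed.
Lemma isZ_minus a b : isZ a -> isZ b -> isZ (a - b).
Proof. intros. apply isZ_add; auto. apply isZ_opp; auto. Qed.
Lemma isZ_mul a b : isZ a -> isZ b -> isZ (a * b).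
Proof. intros [x ->] [y ->]. exists (x * y)%Z. rewrite mult_IZR; auto. Qed.
Lemma isZ_eq a b : a = b -> isZ a -> isZ b. Proof. intros ->; auto. Qed.
Lemma isZ_0 : isZ 0. Proof. exists 0%Z; auto. Qed.

Lemma sum1_ext k f g : (forall j, (1 <= j <= k)%nat -> f j = g j) -> sum1 k f = sum1 k g.
Proof. induction k; simpl; intros H; auto. rewrite IHk by (intros; apply H; lia). rewrite H by lia. auto. Qed.

Lemma sum1_lin3 k f g h : sum1 k f - sum1 k g - sum1 k h = sum1 k (fun j => f j - g j - h j).
Proof. induction k; simpl; [ring|]. rewrite <- IHk. ring. Qed.
Lemma sum1_lin2 k f g : sum1 k f - sum1 k g = sum1 k (fun j => f j - g j).
Proof. induction k; simpl; [ring|]. rewrite <- IHk. ring. Qed.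

Lemma isZ_sum1 k f : (forall j, (1 <= j <= k)%nat -> isZ (f j)) -> isZ (sum1 k f).
Proof. induction k; simpl; intros H. apply isZ_0. apply isZ_add. apply IHk; intros; apply H; lia. apply H; lia. Qed.

Lemma C_n0 n : Binomial.C n 0 = 1.
Proof. unfold Binomial.C. rewrite Nat.sub_0_r. simpl. field. apply INR_fact_neq_0. Qed.
Lemma C_nn n : Binomial.C n n = 1.
Proof. unfold Binomial.C. rewrite Nat.sub_diag. simpl. field. apply INR_fact_neq_0. Qed.

Lemma binom_Z i j : (j <= i)%nat -> isZ (binom i j).
Proof. unfold binom. revert j; induction i; intros j Hj.
 - replace j with O by lia. rewrite C_n0. exists 1%Z; auto.
 - destruct j. rewrite C_n0. exists 1%Z; auto.
   destruct (Nat.eq_dec j i) as [->|Hne]. rewrite C_nn. exists 1%Z; auto.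
   rewrite <- pascal by lia. apply isZ_add; apply IHi; lia. Qed.

Lemma binom_Sn n : binom (S n) n = INR (S n).
Proof. unfold binom. induction n.
 - rewrite C_n0. simpl; auto.
 - rewrite <- pascal by lia. rewrite IHn, C_nn. rewrite (S_INR (S n)). auto. Qed.

Lemma frac_Z a : isZ (frac a - a).
Proof. unfold frac. pose proof (Rplus_Int_part_frac_part a). exists (- Int_part a)%Z. rewrite opp_IZR. lra. Qed.

Lemma fmap_Z zeta X Y Rv i : (forall j, (1 <= j <= i)%nat -> isZ (Y j - X j - Rv j)) ->
  isZ (fmap zeta Y i - fmap zeta X i - Mmul Rv i).
Proof. intros H. unfold fmap, Mmul.
 apply (isZ_eq ((frac (zeta + sum1 i (fun j => binom i j * Y j)) - (zeta + sum1 i (fun j => binom i j * Y j)))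
   - (frac (zeta + sum1 i (fun j => binom i j * X j)) - (zeta + sum1 i (fun j => binom i j * X j)))
   + sum1 i (fun j => binom i j * (Y j - X j - Rv j)))).
 - rewrite (sum1_ext i (fun j => binom i j * (Y j - X j - Rv j)) (fun j => binom i j * Y j - binom i j * X j - binom i j * Rv j)) by (intros; ring).
   rewrite <- sum1_lin3. ring.
 - apply isZ_add. apply isZ_minus; apply frac_Z.
   apply isZ_sum1. intros j Hj. apply isZ_mul. apply binom_Z; lia. auto. Qed.

Lemma iterZ zeta x y n i : isZ (Nat.iter n (fmap zeta) y i - Nat.iter n (fmap zeta) x i - Nat.iter n Mmul (fun k => y k - x k) i).
Proof. revert i; induction n; intros i.
 - simpl. exists 0%Z. simpl. ring.
 - simpl. apply fmap_Z. intros; auto. Qed.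

Definition gmap (zeta : R) (X : nat -> R) : nat -> R := fun i => zeta + sum1 i (fun j => binom i j * X j).

Lemma iterZg zeta x n i : isZ (Nat.iter n (fmap zeta) x i - Nat.iter n (gmap zeta) x i).
Proof. revert i; induction n; intros i.
 - simpl. exists 0%Z. simpl. ring.
 - simpl. unfold fmap at 1, gmap at 1.
   set (X' := Nat.iter n (fmap zeta) x). set (X := Nat.iter n (gmap zeta) x).
   apply (isZ_eq ((frac (zeta + sum1 i (fun j => binom i j * X' j)) - (zeta + sum1 i (fun j => binom i j * X' j)))
      + sum1 i (fun j => binom i j * (X' j - X j)))).
   + rewrite (sum1_ext i (fun j => binom i j * (X' j - X j)) (fun j => binom i j * X' j - binom i j * X j)) by (intros; ring).
     rewrite <- sum1_lin2. ring.
   + apply isZ_add. apply frac_Z. apply isZ_sum1. intros j Hj. apply isZ_mul. apply binom_Z; lia. apply IHn. Qed.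

Lemma iter_Mmul_g r n i : Nat.iter n Mmul r i = Nat.iter n (gmap 0) r i.
Proof. revert i; induction n; intros i; simpl; auto. unfold Mmul at 1, gmap at 1.
 rewrite Rplus_0_l. apply sum1_ext. intros; rewrite IHn; auto. Qed.

Lemma gLead zeta x : forall k i, (1 <= i <= k)%nat -> Lead i zeta (fun n => Nat.iter n (gmap zeta) x i).
Proof. induction k as [|k IH]; intros i Hi; [lia|].
 destruct (Nat.eq_dec i (S k)) as [->|Hne]; [|apply IH; lia].
 set (G := fun j n => Nat.iter n (gmap zeta) x j).
 assert (HD: forall j n, G (S j) (S n) - G (S j) n = zeta + sum1 j (fun l => binom (S j) l * G l n)).
 { intros j n. unfold G. simpl. unfold gmap at 1. simpl. unfold binom at 2. rewrite C_nn. ring. }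
 destruct k as [|k].
 - unfold Lead. simpl. intros n. induction n.
   + simpl. ring.
   + change (G 1%nat (S n) - zeta * INR (S n) ^ 1 = G 1%nat 0%nat - zeta * INR 0 ^ 1).
     change (G 1%nat n - zeta * INR n ^ 1 = G 1%nat 0%nat - zeta * INR 0 ^ 1) in IHn.
     pose proof (HD O n). simpl sum1 in H. rewrite S_INR. simpl pow in *. lra.
 - apply (Lead_antidiff k).
   apply (Lead_ext (S k) (zeta * INR (S (S k))) _ (fun n => binom (S (S k)) (S k) * G (S k) n + (zeta + sum1 k (fun l => binom (S (S k)) l * G l n)))).
   + auto.
   + intros n. fold (G (S (S k)) (S n)). fold (G (S (S k)) n). rewrite HD. simpl sum1. ring.
   + apply (Lead_ext (S k) (binom (S (S k)) (S k) * zeta) _ (fun n => binom (S (S k)) (S k) * G (S k) n + (zeta + sum1 k (fun l => binom (S (S k)) l * G l n)))). rewrite binom_Sn. ring. intros; auto.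
     apply Lead_add. apply Lead_scal. apply IH. lia.
     simpl pred. apply PD_add. apply PD_const. apply (PD_sum1 k k (fun l n => binom (S (S k)) l * G l n)).
     intros j Hj. apply PD_scal. apply (PD_le j). lia. apply (Lead_PD j zeta). apply IH. lia. Qed.

Lemma pow_diff_div n q k : exists z : Z, INR (n + q) ^ k - INR n ^ k = INR q * IZR z.
Proof. induction k as [|k [z Hz]].
 - exists 0%Z. simpl. ring.
 - exists (Z.of_nat (n + q) * z + Z.of_nat (n ^ k))%Z. rewrite plus_IZR, mult_IZR.
   rewrite <- !INR_IZR_INZ. rewrite pow_INR. simpl pow.
   replace (INR (n + q) * INR (n + q) ^ k - INR n * INR n ^ k) with
     (INR (n + q) * (INR (n + q) ^ k - INR n ^ k) + (INR (n + q) - INR n) * INR n ^ k) by ring.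
   rewrite Hz, plus_INR. ring. Qed.

Lemma rat_nat c : is_rational c -> exists (p : Z) (Q : nat), (1 <= Q)%nat /\ c = IZR p / INR Q.
Proof. intros [p [q [Hq E]]]. destruct (Z_lt_le_dec 0 q).
 - exists p, (Z.to_nat q). split. lia. rewrite INR_IZR_INZ, Z2Nat.id by lia. auto.
 - exists (- p)%Z, (Z.to_nat (- q)). split. lia. rewrite INR_IZR_INZ, Z2Nat.id by lia.
   rewrite E, !opp_IZR. field. apply not_0_IZR. auto. Qed.

Lemma tele_Z g q1 : (forall n, isZ (g (n + q1)%nat - g n)) -> forall t n, isZ (g (n + t * q1)%nat - g n).
Proof. intros H t. induction t; intros n.
 - rewrite Nat.add_0_r. simpl. exists 0%Z. simpl. ring.
 - apply (isZ_eq ((g (n + t * q1 + q1)%nat - g (n + t * q1)%nat) + (g (n + t * q1)%nat - g n))).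
   + replace (n + t * q1 + q1)%nat with (n + S t * q1)%nat by lia. ring.
   + apply isZ_add; auto. Qed.

Lemma dich D f : PD D f ->
  (exists q, (1 <= q)%nat /\ forall n, isZ (f (n + q)%nat - f n)) \/
  (exists q e c T, (1 <= q)%nat /\ (1 <= e <= D)%nat /\ irr c /\ Lead e c T /\ forall m, isZ (f (q * m)%nat - T m)).
Proof. revert f; induction D as [|D IH]; intros f Hf.
 - left. exists 1%nat. split; auto. intros n. simpl in Hf. rewrite (Hf (n+1)%nat), (Hf n). exists 0%Z. simpl; ring.
 - destruct (PD_extract D f Hf) as [c Hc].
   set (g := fun n => f n - c * INR n ^ S D) in Hc.
   destruct (classic (is_rational c)) as [Hr|Hi].
   + destruct (rat_nat c Hr) as [p [Q [HQ Ec]]].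
     assert (HQ0: INR Q <> 0) by (apply not_0_INR; lia).
     destruct (IH g Hc) as [[q1 [Hq1 Hg]]|[q1 [e [c' [T [Hq1 [He [Hc' [HT Hg]]]]]]]]].
     * left. exists (Q * q1)%nat. split; [lia|]. intros n.
       destruct (pow_diff_div n (Q * q1) (S D)) as [z Hz].
       apply (isZ_eq ((g (n + Q * q1)%nat - g n) + IZR p * INR q1 * IZR z)).
       { unfold g. replace (c * INR (n + Q * q1) ^ S D) with (c * (INR (n + Q * q1) ^ S D - INR n ^ S D) + c * INR n ^ S D) by ring.
         rewrite Hz, Ec, mult_INR. field. auto. }
       apply isZ_add. apply (tele_Z g q1 Hg Q n).
       apply isZ_mul. apply isZ_mul. apply isZ_IZR. apply isZ_INR. apply isZ_IZR.
     * right. exists (Q * q1)%nat, e, (c' * INR Q ^ e), (fun m => T (0 + Q * m)%nat). repeat split; try lia.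
       -- apply irr_pow; auto.
       -- apply Lead_affine; auto.
       -- intros m. specialize (Hg (Q * m)%nat).
          apply (isZ_eq ((g (q1 * (Q * m))%nat - T (Q * m)%nat) + IZR p * INR (q1 * m * (Q * q1 * m) ^ D))).
          { unfold g. replace (q1 * (Q * m))%nat with (Q * q1 * m)%nat by lia. simpl (0 + Q * m)%nat.
            rewrite Ec. replace (INR (Q * q1 * m) ^ S D) with (INR Q * INR (q1 * m * (Q * q1 * m) ^ D)).
            field. auto. rewrite <- pow_INR. f_equal. rewrite <- mult_INR. f_equal. simpl. lia. }
          apply isZ_add; auto. apply isZ_mul. apply isZ_IZR. apply isZ_INR.
   + right. exists 1%nat, (S D), c, f. repeat split; try lia; auto.
     intros m. rewrite Nat.mul_1_l. exists 0%Z. simpl. ring. Qed.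

Lemma Zcases_abs (k : Z) x eps : Rabs (x - IZR k) < eps ->
  (IZR k <= -1 /\ x + 1 < eps) \/ (k = 0%Z /\ Rabs x < eps) \/ (1 <= IZR k /\ 1 - x < eps).
Proof. intros H. destruct (Z.lt_trichotomy k 0) as [Hk|[Hk|Hk]].
 - left. assert (IZR k <= -1) by (apply IZR_le; lia). split; auto.
   unfold Rabs in H; destruct Rcase_abs; lra.
 - right; left. subst. simpl in H. rewrite Rminus_0_r in H. auto.
 - right; right. assert (1 <= IZR k) by (apply IZR_le; lia). split; auto.
   unfold Rabs in H; destruct Rcase_abs; lra. Qed.

Lemma lnb_pos b : (5 <= b)%nat -> 0 < ln (INR b).
Proof. intros Hb. rewrite <- ln_1. apply ln_increasing. lra. apply lt_1_INR. lia. Qed.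

Lemma L_range b : (5 <= b)%nat -> 0 < logb b 2 < 1/2.
Proof. intros Hb. pose proof (lnb_pos b Hb). unfold logb. split.
 - apply Rdiv_lt_0_compat; auto. rewrite <- ln_1. apply ln_increasing; lra.
 - apply (Rmult_lt_reg_r (ln (INR b))); auto. unfold Rdiv. rewrite Rmult_assoc, Rinv_l by lra.
   assert (ln 4 < ln (INR b)). { apply ln_increasing. lra. replace 4 with (INR 4) by (simpl; ring). apply lt_INR. lia. }
   replace 4 with (2 * 2) in H0 by ring. rewrite ln_mult in H0 by lra. lra. Qed.

Lemma logb_ge2 b t : (5 <= b)%nat -> (2 <= t)%nat -> logb b 2 <= logb b (INR t).
Proof. intros Hb Ht. pose proof (lnb_pos b Hb). unfold logb, Rdiv. apply Rmult_le_compat_r.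
 left; apply Rinv_0_lt_compat; auto.
 assert (2 <= INR t) by (replace 2 with (INR 2) by (simpl; ring); apply le_INR; auto).
 destruct (Req_dec (INR t) 2) as [->|Hne]. lra. left. apply ln_increasing; lra. Qed.

Lemma logb_1 b : logb b (INR 1) = 0.
Proof. unfold logb. simpl. rewrite ln_1. unfold Rdiv. ring. Qed.

Lemma sep_core d b z1 z2 t : (1 <= d)%nat -> (5 <= b)%nat -> (1 <= t <= b - 1)%nat ->
  torus_closure d (U d b t) z1 -> torus_closure d (U d b t) z2 ->
  0 < z1 d < logb b 2 -> logb b 2 < z2 d < 1 -> False.
Proof. intros Hd Hb Ht C1 C2 H1 H2. set (L := logb b 2) in *.
 destruct (Nat.eq_dec t 1) as [->|Ht1].
 - destruct (C2 (Rmin (z2 d - L) (1 - z2 d))) as [u [[Hu Hud] Hk]].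
   { apply Rmin_glb_lt; lra. }
   destruct (Hk d ltac:(lia)) as [k Hk']. destruct (Hu d ltac:(lia)) as [Hu0 Hu1].
   rewrite logb_1 in Hud. replace (INR 1 + 1) with 2 in Hud by (simpl; ring). fold L in Hud.
   pose proof (Rmin_l (z2 d - L) (1 - z2 d)). pose proof (Rmin_r (z2 d - L) (1 - z2 d)).
   destruct (Zcases_abs k (z2 d - u d) _ ltac:(replace (z2 d - u d - IZR k) with (z2 d - u d - IZR k) by ring; exact Hk')) as [[A B]|[[A B]|[A B]]].
   + lra.
   + unfold Rabs in B; destruct Rcase_abs in B; lra.
   + lra.
 - assert (Ht2: (2 <= t)%nat) by lia.
   destruct (C1 (Rmin (z1 d) (L - z1 d))) as [u [[Hu Hud] Hk]].
   { apply Rmin_glb_lt; lra. }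
   destruct (Hk d ltac:(lia)) as [k Hk']. destruct (Hu d ltac:(lia)) as [Hu0 Hu1].
   pose proof (logb_ge2 b t Hb Ht2). fold L in H.
   pose proof (Rmin_l (z1 d) (L - z1 d)). pose proof (Rmin_r (z1 d) (L - z1 d)).
   destruct (Zcases_abs k (z1 d - u d) _ Hk') as [[A B]|[[A B]|[A B]]].
   + lra.
   + unfold Rabs in B; destruct Rcase_abs in B; lra.
   + lra. Qed.

Lemma same_frac a a' : 0 <= a < 1 -> 0 <= a' < 1 -> isZ (a - a') -> a = a'.
Proof. intros H1 H2 [z Hz]. assert (-1 < IZR z < 1) by lra.
 assert (z = 0%Z). { destruct H. apply lt_IZR in H. apply lt_IZR in H0. lia. }
 subst. simpl in Hz. lra. Qed.

Lemma abs_lt z e : Rabs z < e -> - e < z < e.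
Proof. intros H. unfold Rabs in H. destruct Rcase_abs; lra. Qed.

Lemma iter_range zeta x d n : in_torus d x -> (1 <= d)%nat -> 0 <= Nat.iter n (fmap zeta) x d < 1.
Proof. intros Hx Hd. destruct n.
 - simpl. apply Hx. lia.
 - change (0 <= frac_part (zeta + sum1 d (fun j => binom d j * Nat.iter n (fmap zeta) x j)) < 1). pose proof (base_fp (zeta + sum1 d (fun j => binom d j * Nat.iter n (fmap zeta) x j))). lra. Qed.

Lemma finish d b zeta x y n u w : (1 <= d)%nat -> (5 <= b)%nat -> in_torus d x -> in_torus d y ->
  isZ (Nat.iter n (fmap zeta) x d - u) -> isZ (Nat.iter n (fmap zeta) y d - w) ->
  ((0 < u < logb b 2 /\ logb b 2 < w < 1) \/ (0 < w < logb b 2 /\ logb b 2 < u < 1)) ->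
  ~ sim d b zeta x y.
Proof. intros Hd Hb Hx Hy Hu Hw H Hs. pose proof (L_range b Hb).
 assert (Eu: Nat.iter n (fmap zeta) x d = u) by (apply same_frac; auto; [apply iter_range; auto | lra]).
 assert (Ew: Nat.iter n (fmap zeta) y d = w) by (apply same_frac; auto; [apply iter_range; auto | lra]).
 destruct (Hs (S n) ltac:(lia) n ltac:(lia)) as [t [Ht [C1 C2]]].
 destruct H as [[H1 H2]|[H1 H2]].
 - apply (sep_core d b _ _ t Hd Hb Ht C1 C2); rewrite ?Eu, ?Ew; auto.
 - apply (sep_core d b _ _ t Hd Hb Ht C2 C1); rewrite ?Eu, ?Ew; auto. Qed.

Theorem mainTheorem5 (d b : nat) (a : R) (x y : nat -> R) :
  (1 <= d)%nat -> (5 <= b)%nat -> 0 < a ->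
  ~ is_rational (logb b a) ->
  in_torus d x -> in_torus d y ->
  ~ stable d (fun i => y i - x i) ->
  ~ sim d b (logb b a) x y.
Proof.
 intros Hd Hb Ha Hirr Hx Hy Hns.
 set (zeta := logb b a) in *.
 set (r := fun i => y i - x i) in *.
 set (Pn := fun n => Nat.iter n Mmul r d).
 set (Gd := fun n => Nat.iter n (gmap zeta) x d).
 pose proof (L_range b Hb) as HL. set (L := logb b 2) in *.
 assert (F2: forall n, isZ (Nat.iter n (fmap zeta) y d - Nat.iter n (fmap zeta) x d - Pn n)) by (intros; apply iterZ).
 assert (F3: forall n, isZ (Nat.iter n (fmap zeta) x d - Gd n)) by (intros; apply iterZg).
 assert (F4: Lead d zeta Gd) by (apply (gLead zeta x d d); lia).
 assert (F5: PD (pred d) Pn).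
 { pose proof (gLead 0 r d d ltac:(lia)) as H. unfold Lead in H.
   refine (PD_ext _ _ Pn _ H). intros n. unfold Pn. rewrite iter_Mmul_g. ring. }
 assert (Hk: exists k, (0 < k)%nat /\ ~ isZ (Pn k)).
 { apply NNPP; intros Hn; apply Hns. intros k Hk0. apply NNPP. intros Hz. apply Hn. exists k; split; auto.
   }
 destruct Hk as [k [Hk0 Hk]].
 assert (Hz: irr zeta) by exact Hirr.
 destruct (dich (pred d) Pn F5) as [[q1 [Hq1 HP]]|[q [e [c [T [Hq [He [Hc [HT HPT]]]]]]]]].
 -
   set (dl := frac_part (Pn k)).
   pose proof (base_fp (Pn k)) as [Hd0 Hd1]. fold dl in Hd0, Hd1.
   assert (Hdl: dl <> 0). { intros E. apply Hk. apply fp_nat. auto. }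
   assert (HPm: forall m, isZ (Pn (k + q1 * m)%nat - dl)).
   { intros m. apply (isZ_eq ((Pn (k + m * q1)%nat - Pn k) + IZR (Int_part (Pn k)))).
     - replace (k + m * q1)%nat with (k + q1 * m)%nat by lia. pose proof (Rplus_Int_part_frac_part (Pn k)). fold dl in H. lra.
     - apply isZ_add. apply (tele_Z Pn q1 HP m k). apply isZ_IZR. }
   set (Qt := fun m => Gd (k + q1 * m)%nat).
   assert (HQt: Lead d (zeta * INR q1 ^ d) Qt) by (apply Lead_affine; auto).
   assert (HW1: forall j, (j <> 0)%Z -> forall a0 al, Avg (fun m => a0 * cos (2 * PI * (IZR j * Qt m) + al)) 0).
   { intros j Hj a0 al. apply (Avg_cosW d (IZR j * (zeta * INR q1 ^ d)) (fun m => IZR j * Qt m)); [lia| |].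
     apply irr_mulZ; auto. apply irr_pow; auto. apply Lead_scal; auto. }
   assert (Hfin: forall m u w, isZ (Qt m - u) -> isZ (u + dl - w) ->
      ((0 < u < L /\ L < w < 1) \/ (0 < w < L /\ L < u < 1)) -> ~ sim d b zeta x y).
   { intros m u w H1 H2 H3. apply (finish d b zeta x y (k + q1 * m)%nat u w); auto.
     - apply (isZ_eq ((Nat.iter (k + q1 * m) (fmap zeta) x d - Gd (k + q1 * m)%nat) + (Qt m - u))); [unfold Qt; ring|].
       apply isZ_add; auto.
     - apply (isZ_eq ((Nat.iter (k + q1 * m) (fmap zeta) y d - Nat.iter (k + q1 * m) (fmap zeta) x d - Pn (k + q1 * m)%nat)
          + (Nat.iter (k + q1 * m) (fmap zeta) x d - Gd (k + q1 * m)%nat) + (Qt m - u) + (Pn (k + q1 * m)%nat - dl) + (u + dl - w))); [unfold Qt; ring|].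
       apply isZ_add; [apply isZ_add; [apply isZ_add; [apply isZ_add; [apply F2|apply F3]|exact H1]|apply HPm]|exact H2]. }
   destruct (Rle_dec dl (1/2)) as [Hsm|Hbg].
   + set (lo := Rmax 0 (L - dl)).
     assert (Hlo: 0 <= lo /\ L - dl <= lo /\ lo < L) by (unfold lo; split; [apply Rmax_l|split; [apply Rmax_r|apply Rmax_lub_lt; lra]]).
     destruct (hit1 Qt ((lo + L)/2) ((L - lo)/2)) as [m [kk Hm]]; [lra|auto|].
     apply abs_lt in Hm.
     apply (Hfin m (Qt m - IZR kk) (Qt m - IZR kk + dl)).
     * exists kk. ring.
     * exists 0%Z. simpl. ring.
     * left. lra.
   + set (lo := Rmax L (1 - dl)). set (hi := Rmin 1 (1 - dl + L)).
     assert (Hlo: L <= lo /\ 1 - dl <= lo) by (unfold lo; split; [apply Rmax_l|apply Rmax_r]).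
     assert (Hhi: hi <= 1 /\ hi <= 1 - dl + L) by (unfold hi; split; [apply Rmin_l|apply Rmin_r]).
     assert (Hlh: lo < hi) by (unfold lo, hi; apply Rmax_lub_lt; apply Rmin_glb_lt; lra).
     destruct (hit1 Qt ((lo + hi)/2) ((hi - lo)/2)) as [m [kk Hm]]; [lra|auto|].
     apply abs_lt in Hm.
     apply (Hfin m (Qt m - IZR kk) (Qt m - IZR kk + dl - 1)).
     * exists kk. ring.
     * exists 1%Z. simpl. ring.
     * right. lra.
 -
   set (Qt := fun m => Gd (0 + q * m)%nat).
   assert (HQt: Lead d (zeta * INR q ^ d) Qt) by (apply Lead_affine; auto).
   assert (HW2: forall j l, (j <> 0 \/ l <> 0)%Z -> forall a0 al,
      Avg (fun m => a0 * cos (2 * PI * (IZR j * Qt m + IZR l * T m) + al)) 0).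
   { intros j l Hjl a0 al. destruct (Z.eq_dec j 0) as [->|Hj].
     - apply (Avg_ext (fun m => a0 * cos (2 * PI * (IZR l * T m) + al))); [intros; simpl; f_equal; f_equal; ring|].
       apply (Avg_cosW e (IZR l * c) (fun m => IZR l * T m)); [lia| |].
       apply irr_mulZ; auto. lia. apply Lead_scal; auto.
     - apply (Avg_cosW d (IZR j * (zeta * INR q ^ d)) (fun m => IZR j * Qt m + IZR l * T m)); [lia| |].
       apply irr_mulZ; auto. apply irr_pow; auto.
       apply Lead_add. apply Lead_scal; auto. apply PD_scal. apply (PD_le e). lia. apply (Lead_PD e c); auto. }
   set (eta := Rmin (L / 4) ((5/8 - L) / 2)).
   assert (Heta: 0 < eta /\ eta <= L / 4 /\ eta <= (5/8 - L)/2).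
   { unfold eta. split; [apply Rmin_glb_lt; lra|split; [apply Rmin_l|apply Rmin_r]]. }
   destruct (hit2 Qt T (L/2) ((L + 5/8)/2) eta) as [m [[k1 H1] [k2 H2]]]; [lra|auto|].
   apply abs_lt in H1. apply abs_lt in H2.
   set (u := Qt m - IZR k1). set (v := T m - IZR k2).
   apply (finish d b zeta x y (q * m)%nat u (u + v)); auto.
   + apply (isZ_eq ((Nat.iter (q * m) (fmap zeta) x d - Gd (q * m)%nat) + IZR k1)); [unfold u, Qt; simpl; ring|].
     apply isZ_add; auto. apply isZ_IZR.
   + apply (isZ_eq ((Nat.iter (q * m) (fmap zeta) y d - Nat.iter (q * m) (fmap zeta) x d - Pn (q * m)%nat)
        + (Nat.iter (q * m) (fmap zeta) x d - Gd (q * m)%nat) + (Pn (q * m)%nat - T m) + IZR k1 + IZR k2)); [unfold u, v, Qt; simpl; ring|].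
     apply isZ_add; [apply isZ_add; [apply isZ_add; [apply isZ_add; [apply F2|apply F3]|apply HPT]|apply isZ_IZR]|apply isZ_IZR].
   + left. destruct Heta as [He1 [He2 He3]]. destruct HL. unfold u, v in *. change (logb b 2) with L. lra.
Qed.
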